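(* For every integer $k\geq 1$, every graph with average degree at least $4k$ contains the complete graph $K_k$ as a minor, or contains a minor with $n$ vertices and minimum degree $\delta$, where $\delta\geq 0.6273n$, $2\delta-n\geq 0.5773k$, and $k\leq\delta<n\leq 4k$.
   Context: All graphs are finite and simple. A graph $H$ is a minor of $G$ if a graph isomorphic to $H$ can be obtained from a subgraph of $G$ by contracting edges. *)

(* Defs.v *)
From mathcomp Require Import all_boot.
Set Implicit Arguments. Unset Strict Implicit. Unset Printing Implicit Defensive.

Definition simple_graph (T : finType) (e : rel T) : Prop :=
  symmetric e /\ irreflexive e.

Definition deg (T : finType) (e : rel T) (v : T) : nat := #|[set w | e v w]|.

Definition is_min_degree (T : finType) (e : rel T) (d : nat) : Prop :=
  (forall v, d <= deg e v) /\ (exists v, deg e v = d).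

Definition connected_in (T : finType) (e : rel T) (A : {set T}) : Prop :=
  forall x y, x \in A -> y \in A ->
    connect [rel u w | [&& e u w, u \in A & w \in A]] x y.

Definition is_minor (G : finType) (eG : rel G) (H : finType) (eH : rel H) : Prop :=
  exists phi : H -> {set G},
    [/\ forall u, phi u != set0,
        forall u, connected_in eG (phi u),
        forall u v, u != v -> [disjoint phi u & phi v]
      & forall u v, eH u v ->
          exists x y, [/\ x \in phi u, y \in phi v & eG x y]].

Definition complete_rel (k : nat) : rel 'I_k := fun i j => i != j.

(* Main.v *)
Require Import Defs.
From mathcomp Require Import all_boot zify.
From Stdlib Require NArith.
Set Implicit Arguments. Unset Strict Implicit. Unset Printing Implicit Defensive.

(* Proof outline: graph minors are represented by "models"
   (sets of branch sets with an edge relation); a Mader-type minimality argument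
   gives a dense neighbourhood minor F with at most 4k vertices; a second
   minimality argument with a carefully chosen density function g (closed form
   for k >= 60, verified tables for k < 60) produces the required minor. *)

Section Models.
Variables (G : finType) (e : rel G).
Hypothesis esym : symmetric e.

Definition adjB (X Y : {set G}) : bool := [exists x in X, exists y in Y, e x y].
Definition resr (X : {set G}) := [rel u w | [&& e u w, u \in X & w \in X]].
Definition connB (X : {set G}) : bool :=
  [forall x in X, [forall y in X, connect (resr X) x y]].

Lemma connBP (X : {set G}) : connB X -> connected_in e X.
Proof. by move=> /forall_inP h x y hx hy; move: (h x hx) => /forall_inP; apply. Qed.

Lemma connB1 x : connB [set x].
Proof.
apply/forall_inP=> a; rewrite inE => /eqP->; apply/forall_inP=> b; rewrite inE => /eqP->.
exact: connect0.
Qed.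

Lemma resr_sub (X Y : {set G}) : X \subset Y -> subrel (resr X) (resr Y).
Proof.
move=> sXY u w /=; case/and3P=> euw uX wX.
by rewrite euw (subsetP sXY _ uX) (subsetP sXY _ wX).
Qed.

Lemma connect_mono (X Y : {set G}) u w : X \subset Y -> connect (resr X) u w -> connect (resr Y) u w.
Proof.
move=> sXY; apply: connect_sub => a b hab; apply: connect1; exact: resr_sub hab.
Qed.

Lemma connBU (X Y : {set G}) x y : connB X -> connB Y -> x \in X -> y \in Y -> e x y -> connB (X :|: Y).
Proof.
move=> /forall_inP cX /forall_inP cY xX yY exy.
have sX : X \subset X :|: Y by apply: subsetUl.
have sY : Y \subset X :|: Y by apply: subsetUr.
have cXX a b : a \in X -> b \in X -> connect (resr (X :|: Y)) a b.
  by move=> aX bX; apply: (connect_mono sX); move/forall_inP: (cX a aX); apply.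
have cYY a b : a \in Y -> b \in Y -> connect (resr (X :|: Y)) a b.
  by move=> aY bY; apply: (connect_mono sY); move/forall_inP: (cY a aY); apply.
have exy' : resr (X :|: Y) x y by rewrite /= exy (subsetP sX _ xX) (subsetP sY _ yY).
have eyx' : resr (X :|: Y) y x by rewrite /= esym exy (subsetP sX _ xX) (subsetP sY _ yY).
apply/forall_inP=> a aU; apply/forall_inP=> b bU.
move: aU bU; rewrite !inE => /orP[aX|aY] /orP[bX|bY].
- exact: cXX.
- exact: (connect_trans (cXX _ _ aX xX) (connect_trans (@connect1 _ (resr (X :|: Y)) _ _ exy') (cYY _ _ yY bY))).
- exact: (connect_trans (cYY _ _ aY yY) (connect_trans (@connect1 _ (resr (X :|: Y)) _ _ eyx') (cXX _ _ xX bX))).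
- exact: cYY.
Qed.

Definition validM (P : {set {set G}}) (E : {set {set G} * {set G}}) : bool :=
  [&& [forall X in P, (X != set0) && connB X],
      [forall X in P, [forall Y in P, (X != Y) ==> [disjoint X & Y]]] &
      [forall p in E, [&& p.1 \in P, p.2 \in P, p.1 != p.2, (p.2, p.1) \in E & adjB p.1 p.2]]].

Section Valid.
Variables (P : {set {set G}}) (E : {set {set G} * {set G}}).
Hypothesis vM : validM P E.

Lemma vM_vert (X : {set G}) : X \in P -> (X != set0) && connB X.
Proof. by case/and3P: vM => /forall_inP h _ _; apply: h. Qed.

Lemma vM_disj (X Y : {set G}) : X \in P -> Y \in P -> X != Y -> [disjoint X & Y].
Proof.
case/and3P: vM => _ /forall_inP h _ XP YP; move: (h X XP) => /forall_inP /(_ Y YP).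
by move/implyP.
Qed.

Lemma vM_edge (X Y : {set G}) : (X, Y) \in E ->
  [&& X \in P, Y \in P, X != Y, (Y, X) \in E & adjB X Y].
Proof. by case/and3P: vM => _ _ /forall_inP h /h. Qed.

Lemma vM_sym (X Y : {set G}) : ((X, Y) \in E) = ((Y, X) \in E).
Proof.
by apply/idP/idP => /vM_edge /and5P[]. 
Qed.
End Valid.

Definition Nbr (E : {set {set G} * {set G}}) (X : {set G}) := [set Y | (X, Y) \in E].

End Models.


Section Count.
Variables (G : finType) (e : rel G).
Variables (P : {set {set G}}) (E : {set {set G} * {set G}}).
Hypothesis vM : validM e P E.

Lemma Nbr_sub (X : {set G}) : Nbr E X \subset P :\ X.
Proof.
apply/subsetP=> Y; rewrite inE => /(vM_edge vM) /and5P[XP YP nXY _ _].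
by rewrite !inE eq_sym nXY YP.
Qed.

Lemma deg_lt (X : {set G}) : X \in P -> #|Nbr E X| < #|P|.
Proof.
move=> XP; have := subset_leq_card (Nbr_sub X).
by rewrite (cardsD1 X P) XP add1n ltnS.
Qed.

Lemma fib1 (X : {set G}) : #|[set q in E | q.1 == X]| = #|Nbr E X|.
Proof.
rewrite -(card_imset (Nbr E X) (fun a b (h : (X, a) = (X, b)) => congr1 snd h)).
apply: eq_card => q; rewrite inE; apply/andP/imsetP.
  by case: q => a b [qE /eqP /= aX]; subst a; exists b; rewrite ?inE.
by case=> Y; rewrite inE => h ->; split.
Qed.

Lemma fib2 (X : {set G}) : #|[set q in E | q.2 == X]| = #|Nbr E X|.
Proof.
rewrite -(card_imset (Nbr E X) (fun a b (h : (a, X) = (b, X)) => congr1 fst h)).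
apply: eq_card => q; rewrite inE; apply/andP/imsetP.
  by case: q => a b [qE /eqP /= bX]; subst b; exists a; rewrite ?inE // (vM_sym vM).
by case=> Y; rewrite inE (vM_sym vM) => h ->; split.
Qed.

Lemma sum_deg : \sum_(X in P) #|Nbr E X| = #|E|.
Proof.
rewrite -sum1_card (partition_big (fun q => q.1) (mem P)) /=; last first.
  by move=> q /=; case: q => a b /(vM_edge vM) /and5P[].
apply: eq_bigr => X XP; rewrite -fib1 -sum1_card; apply: eq_bigl => q.
by rewrite inE.
Qed.

Lemma mindeg_bound d : (forall X, X \in P -> d <= #|Nbr E X|) -> d * #|P| <= #|E|.
Proof.
move=> h; rewrite -sum_deg mulnC -sum_nat_const; apply: leq_sum => X; exact: h.
Qed.

Lemma E_bound : #|E| <= #|P| * (#|P| - 1).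
Proof.
rewrite -sum_deg -sum_nat_const; apply: leq_sum => X XP.
have := deg_lt XP; lia.
Qed.

End Count.


Section Ops.
Variables (G : finType) (e : rel G).

Lemma validM_mk (P : {set {set G}}) (E : {set {set G} * {set G}}) :
  (forall X, X \in P -> (X != set0) && connB e X) ->
  (forall X Y, X \in P -> Y \in P -> X != Y -> [disjoint X & Y]) ->
  (forall X Y, (X, Y) \in E -> [&& X \in P, Y \in P, X != Y, (Y, X) \in E & adjB e X Y]) ->
  validM e P E.
Proof.
move=> h1 h2 h3; apply/and3P; split.
- by apply/forall_inP.
- apply/forall_inP=> X XP; apply/forall_inP=> Y YP; apply/implyP; exact: h2.
- by apply/forall_inP=> -[X Y]; apply: h3.
Qed.

Variables (P : {set {set G}}) (E : {set {set G} * {set G}}).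
Hypothesis vM : validM e P E.

Definition delE (p : {set G} * {set G}) := E :\ p :\ (p.2, p.1).

Lemma valid_delE p : validM e P (delE p).
Proof.
apply: validM_mk.
- exact: vM_vert vM.
- exact: vM_disj vM.
move=> X Y; rewrite !inE => /and3P[h1 h2 XYE].
case/and5P: (vM_edge vM XYE) => -> -> -> YXE ->; rewrite YXE andbT /= andbT.
case: p h1 h2 => a b /=; rewrite !xpair_eqE => h1 h2.
by apply/andP; split; [move: h2|move: h1]; apply: contra => /andP[-> ->].
Qed.

Lemma card_delE p : p \in E -> #|delE p| < #|E| /\ #|E| <= #|delE p| + 2.
Proof.
move=> pE; rewrite /delE.
have h1 := cardsD1 p E; have h2 := cardsD1 (p.2, p.1) (E :\ p).
rewrite pE /= in h1; move: h2; case: (_ \in _) => /= h2; rewrite h1 h2; move: #|E :\ p :\ _| => n; split; lia.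
Qed.

Definition delV (X : {set G}) := [set q in E | (q.1 != X) && (q.2 != X)].

Lemma valid_delV X : validM e (P :\ X) (delV X).
Proof.
apply: validM_mk.
- by move=> Y; rewrite inE => /andP[_ YP]; have := vM_vert vM YP.
- by move=> Y Z; rewrite !inE => /andP[_ YP] /andP[_ ZP]; have := vM_disj vM YP ZP.
move=> Y Z; rewrite !inE /= => /and3P[YZE nY nZ].
case/and5P: (vM_edge vM YZE) => -> -> -> ZYE ->.
by rewrite nY nZ ZYE.
Qed.

Lemma card_delV X : #|delV X| <= #|E| /\ #|E| <= #|delV X| + 2 * #|Nbr E X|.
Proof.
split; first by apply: subset_leq_card; apply/subsetP=> q; rewrite inE => /andP[].
have sub : E \subset delV X :|: [set q in E | q.1 == X] :|: [set q in E | q.2 == X].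
  apply/subsetP=> q qE; rewrite !inE qE /=.
  by case: (q.1 == X); case: (q.2 == X).
apply: (leq_trans (subset_leq_card sub)).
apply: (leq_trans (leq_card_setU _ _)).
rewrite (fib2 vM) mul2n -addnn addnA leq_add2r.
apply: (leq_trans (leq_card_setU _ _)).
by rewrite fib1.
Qed.

Definition indE (Q : {set {set G}}) := [set q in E | (q.1 \in Q) && (q.2 \in Q)].

Lemma valid_indE (Q : {set {set G}}) : Q \subset P -> validM e Q (indE Q).
Proof.
move=> sQP; apply: validM_mk.
- by move=> Y /(subsetP sQP) YP; have := vM_vert vM YP.
- by move=> Y Z /(subsetP sQP) YP /(subsetP sQP) ZP; have := vM_disj vM YP ZP.
move=> Y Z; rewrite !inE /= => /and3P[YZE YQ ZQ].
case/and5P: (vM_edge vM YZE) => _ _ -> ZYE ->.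
by rewrite YQ ZQ ZYE.
Qed.

Lemma Nbr_indE (Q : {set {set G}}) (Y : {set G}) : Y \in Q -> Nbr (indE Q) Y = Nbr E Y :&: Q.
Proof. by move=> YQ; apply/setP=> Z; rewrite !inE /= YQ. Qed.

End Ops.


Definition OK (n d k : nat) : bool :=
  [&& (9*17*41) * n <= (100*100) * d, (100*100) * n + (23*251) * k <= (200*100) * d & k <= d].

Lemma OK_mono n d d' k : OK n d k -> d <= d' -> OK n d' k.
Proof.
rewrite /OK => /and3P[h1 h2 h3] dd.
apply/and3P; split.
- apply: (leq_trans h1); rewrite leq_mul2l; by rewrite dd orbT.
- apply: (leq_trans h2); rewrite leq_mul2l; by rewrite dd orbT.
- exact: leq_trans h3 dd.
Qed.


Section Contr.
Variables (G : finType) (e : rel G).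
Hypothesis esym : symmetric e.
Variables (P : {set {set G}}) (E : {set {set G} * {set G}}).
Hypothesis vM : validM e P E.
Variables (X Y : {set G}).
Hypothesis XYE : (X, Y) \in E.


Definition fc (W : {set G}) := if (W == X) || (W == Y) then X :|: Y else W.
Definition Pc := (X :|: Y) |: (P :\ X :\ Y).
Definition Ec := [set (fc q.1, fc q.2) | q in [set q in E | fc q.1 != fc q.2]].

Let XP : X \in P. Proof. by case/and5P: (vM_edge vM XYE). Qed.
Let YP : Y \in P. Proof. by case/and5P: (vM_edge vM XYE). Qed.
Let nXY : X != Y. Proof. by case/and5P: (vM_edge vM XYE). Qed.
Let aXY : adjB e X Y. Proof. by case/and5P: (vM_edge vM XYE). Qed.
Let dXY : [disjoint X & Y]. Proof. exact (vM_disj vM XP YP nXY). Qed.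
Let X0 : X != set0. Proof. by case/andP: (vM_vert vM XP). Qed.
Let Y0 : Y != set0. Proof. by case/andP: (vM_vert vM YP). Qed.

Lemma disj_mem (A B : {set G}) x : [disjoint A & B] -> x \in A -> x \in B -> False.
Proof. by move=> d xA; rewrite (disjointFr d xA). Qed.

Lemma ZnP : X :|: Y \notin P.
Proof.
apply/negP=> ZP.
have [x xX] := set0Pn _ X0.
have ZX : X :|: Y != X.
  apply/negP=> /eqP h; have [y yY] := set0Pn _ Y0.
  have : y \in X by rewrite -h inE yY orbT.
  by move/(disj_mem dXY)/(_ yY).
apply: (disj_mem (vM_disj vM ZP XP ZX) _ xX); by rewrite inE xX.
Qed.

Lemma fc_P (W : {set G}) : W \in P -> fc W \in Pc.
Proof.
move=> WP; rewrite /fc /Pc; case: ifP => h; rewrite !inE ?eqxx //.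
by move/norP: h => [-> ->]; rewrite WP !orbT.
Qed.

Lemma fc_sub (W : {set G}) : W \subset fc W.
Proof.
rewrite /fc; case: ifP => // /orP[] /eqP ->; [exact: subsetUl|exact: subsetUr].
Qed.

Lemma fc_eq (W1 W2 : {set G}) : W1 \in P -> W2 \in P -> fc W1 = fc W2 ->
  W1 = W2 \/ (((W1 == X) || (W1 == Y)) && ((W2 == X) || (W2 == Y))).
Proof.
move=> W1P W2P; rewrite /fc.
case: ifP => h1; case: ifP => h2.
- by move=> _; right; apply/andP.
- by move=> h; move: ZnP; rewrite h W2P.
- by move=> h; move: ZnP; rewrite -h W1P.
- by left.
Qed.

Lemma adjB_mono (A B A' B' : {set G}) : A \subset A' -> B \subset B' -> adjB e A B -> adjB e A' B'.
Proof.
move=> sA sB /existsP[x /andP[xA /existsP[y /andP[yB exy]]]].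
apply/existsP; exists x; rewrite (subsetP sA _ xA) /=.
by apply/existsP; exists y; rewrite (subsetP sB _ yB).
Qed.

Lemma valid_contr : validM e Pc Ec.
Proof.
apply: validM_mk.
- move=> W; rewrite /Pc !inE => /orP[/eqP ->|/and3P[_ _ WP]]; last by have := vM_vert vM WP.
  apply/andP; split.
    apply/set0Pn; have [x xX] := set0Pn _ X0; by exists x; rewrite inE xX.
  have [/andP[_ cX] /andP[_ cY]] := (vM_vert vM XP, vM_vert vM YP).
  case/existsP: aXY => x /andP[xX /existsP[y /andP[yY exy]]].
  exact (connBU esym cX cY xX yY exy).
- move=> W1 W2; rewrite /Pc !inE.
  have dZ (W : {set G}) : W \in P -> W != X -> W != Y -> [disjoint X :|: Y & W].
    move=> WP nWX nWY; rewrite disjoints_subset; apply/subsetP=> x; rewrite !inE => /orP[xX|xY].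
      apply/negP=> xW; apply: (disj_mem (vM_disj vM XP WP _) xX xW); by rewrite eq_sym.
    apply/negP=> xW; apply: (disj_mem (vM_disj vM YP WP _) xY xW); by rewrite eq_sym.
  move=> /orP[/eqP->|/and3P[h1 h2 W1P]] /orP[/eqP->|/and3P[h3 h4 W2P]].
  + by rewrite eqxx.
  + by move=> _; apply: dZ.
  + by move=> _; rewrite disjoint_sym; apply: dZ.
  + by move=> n12; have := vM_disj vM W1P W2P n12.
- move=> W1 W2 /imsetP[[a b]]; rewrite inE /= => /andP[abE nf] [-> ->].
  case/and5P: (vM_edge vM abE) => aP bP _ baE aab.
  rewrite (fc_P aP) (fc_P bP) nf /=.
  apply/andP; split; last exact: adjB_mono (fc_sub a) (fc_sub b) aab.
  by apply/imsetP; exists (b, a); rewrite // inE baE /= eq_sym.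
Qed.


Lemma card_Pc : #|Pc|.+1 = #|P|.
Proof.
have h : (X :|: Y \in P :\ X :\ Y) = false by rewrite !inE (negbTE ZnP) !andbF.
rewrite /Pc cardsU1 h /=.
rewrite (cardsD1 X P) XP (cardsD1 Y (P :\ X)) !inE eq_sym nXY YP /=.
by rewrite add1n.
Qed.

Lemma card_Ec_le : #|Ec| <= #|E|.
Proof.
apply: (leq_trans (leq_imset_card _ _)); apply: subset_leq_card.
by apply/subsetP=> q; rewrite inE => /andP[].
Qed.

Definition Sc := [set q in E | [&& q != (X, Y), q != (Y, X),
   ~~ ((q.1 == Y) && ((X, q.2) \in E)) & ~~ ((q.2 == Y) && ((X, q.1) \in E))]].

Lemma hc_inj : {in Sc &, injective (fun q : {set G} * {set G} => (fc q.1, fc q.2))}.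
Proof.
move=> [a b] [a' b']; rewrite !inE /=.
move=> /andP[abE /and4P[n1 n2 nB1 nB2]] /andP[abE' /and4P[n1' n2' nB1' nB2']] [ea eb].
case/and5P: (vM_edge vM abE) => aP bP nab baE _.
case/and5P: (vM_edge vM abE') => a'P b'P na'b' b'a'E _.
case: (fc_eq aP a'P ea) => [Ea|/andP[xa xa']]; case: (fc_eq bP b'P eb) => [Eb|/andP[xb xb']].
- by rewrite Ea Eb.
- subst a'; move: xb xb' => /orP[/eqP Eb|/eqP Eb] /orP[/eqP Eb'|/eqP Eb']; subst b b' => //.
  + by move: nB2'; rewrite eqxx -(vM_sym vM) abE.
  + by move: nB2; rewrite eqxx -(vM_sym vM) abE'.
- subst b'; move: xa xa' => /orP[/eqP Ea|/eqP Ea] /orP[/eqP Ea'|/eqP Ea']; subst a a' => //.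
  + by move: nB1'; rewrite eqxx abE.
  + by move: nB1; rewrite eqxx abE'.
- move: xa xb nab n1 n2 => /orP[/eqP Ea|/eqP Ea] /orP[/eqP Eb|/eqP Eb]; subst a b;
  by rewrite ?eqxx.
Qed.

Lemma card_Ec_ge : #|E| <= #|Ec| + 2 + 2 * #|Nbr E X :&: Nbr E Y|.
Proof.
set Cm := Nbr E X :&: Nbr E Y.
have h1 : #|Sc| <= #|Ec|.
  rewrite -(card_in_imset hc_inj); apply: subset_leq_card; apply/subsetP=> q /imsetP[p pS ->].
  apply/imsetP; exists p => //; move: pS; rewrite !inE => /andP[pE /and4P[n1 n2 _ _]].
  rewrite pE /=; case: p pE n1 n2 => a b pE n1 n2 /=.
  case/and5P: (vM_edge vM pE) => aP bP nab _ _.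
  apply/negP=> /eqP h; case: (fc_eq aP bP h) => [/eqP|/andP[]]; first by rewrite (negbTE nab).
  move=> xa xb; move: xa xb nab n1 n2.
  by move=> /orP[/eqP->|/eqP->] /orP[/eqP->|/eqP->]; rewrite ?eqxx.
set B1 := [set q in E | (q.1 == Y) && ((X, q.2) \in E)].
set B2 := [set q in E | (q.2 == Y) && ((X, q.1) \in E)].
have hB1 : #|B1| <= #|Cm|.
  apply: (@leq_trans #|[set (Y, W) | W in Cm]|); last exact: leq_imset_card.
  apply: subset_leq_card; apply/subsetP=> -[a b]; rewrite !inE /= => /andP[abE /andP[/eqP Ea XbE]].
  subst a; apply/imsetP; exists b => //; by rewrite !inE XbE abE.
have hB2 : #|B2| <= #|Cm|.
  apply: (@leq_trans #|[set (W, Y) | W in Cm]|); last exact: leq_imset_card.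
  apply: subset_leq_card; apply/subsetP=> -[a b]; rewrite !inE /= => /andP[abE /andP[/eqP Eb XaE]].
  subst b; apply/imsetP; exists a => //; by rewrite !inE XaE -(vM_sym vM) abE.
have hsub : E \subset Sc :|: B1 :|: B2 :|: [set (X, Y); (Y, X)].
  apply/subsetP=> q qE; rewrite !inE qE /=.
  by case: (q == (X, Y)); case: (q == (Y, X)); case: ((q.1 == Y) && _); case: ((q.2 == Y) && _).
have := subset_leq_card hsub.
have := leq_of_leqif (leq_card_setU (Sc :|: B1 :|: B2) [set (X, Y); (Y, X)]).
have := leq_of_leqif (leq_card_setU (Sc :|: B1) B2).
have := leq_of_leqif (leq_card_setU Sc B1).
have := cards2 (X, Y) (Y, X).
move: #|Sc :|: B1 :|: B2 :|: _| #|Sc :|: B1 :|: B2| #|Sc :|: B1| #|[set (X, Y); (Y, X)]| => n1 n2 n3 n4.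
move: #|Sc| #|B1| #|B2| #|Cm| #|Ec| #|E| h1 hB1 hB2 => s b1 b2 c ec ee.
case: (_ != _) => /=; lia.
Qed.

End Contr.


Lemma min_exists (T : finType) (p : pred T) (f : T -> nat) x0 :
  p x0 -> exists x, p x /\ forall y, p y -> f x <= f y.
Proof. by move=> px0; case: (arg_minnP f px0) => x px h; exists x. Qed.

Section Stages.
Variables (G : finType) (e : rel G).
Hypothesis esym : symmetric e.

Definition mindegM (P : {set {set G}}) (E : {set {set G} * {set G}}) d :=
  (forall X, X \in P -> d <= #|Nbr E X|) /\ (exists2 X, X \in P & #|Nbr E X| = d).

Lemma mindeg_exists (P : {set {set G}}) (E : {set {set G} * {set G}}) X1 :
  X1 \in P -> exists X0, X0 \in P /\ mindegM P E #|Nbr E X0|.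
Proof.
move=> X1P; have [X0 [X0P h]] := min_exists (fun X => #|Nbr E X|) X1P.
by exists X0; split=> //; split; [exact: h | exists X0].
Qed.

Lemma stage1 k (P0 : {set {set G}}) (E0 : {set {set G} * {set G}}) :
  0 < k -> validM e P0 E0 -> 0 < #|P0| -> 4 * k * #|P0| <= #|E0| ->
  exists P E X0, [/\ validM e P E, X0 \in P,
     2 * k < #|Nbr E X0| <= 4 * k &
     forall Y, Y \in Nbr E X0 -> 2 * k <= #|Nbr E Y :&: Nbr E X0| ].
Proof.
move=> k0 v0 p0 e0.
pose fam (M : {set {set G}} * {set {set G} * {set G}}) :=
  [&& validM e M.1 M.2, 0 < #|M.1| & 4 * k * #|M.1| <= #|M.2|].
have f0 : fam (P0, E0) by rewrite /fam /= v0 p0 e0.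
have [[P E] [/and3P[vM pP eP] hmin]] :=
  @min_exists _ fam (fun M : {set {set G}} * {set {set G} * {set G}} => #|M.1| + #|M.2|) _ f0.
rewrite /= in pP eP hmin.
have hm P' E' : validM e P' E' -> 0 < #|P'| -> 4 * k * #|P'| <= #|E'| ->
    #|P| + #|E| <= #|P'| + #|E'|.
  by move=> a b c; apply: (hmin (P', E')); rewrite /fam /= a b c.
have P2 : 1 < #|P|.
  rewrite ltnNge; apply/negP=> h; have := E_bound vM.
  have -> : #|P| - 1 = 0 by lia.
  move: #|E| #|P| eP pP h => ee pp; nia.
have [p pE] : exists p, p \in E.
  have : 0 < #|E| by move: #|E| eP P2 => ee; nia.
  by rewrite card_gt0 => /set0Pn.
have hE : #|E| <= 4 * k * #|P| + 1.
  have [lt le] := card_delE vM pE.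
  have H := hm P (delE E p) (valid_delE vM p) pP.
  move: #|delE E p| #|E| #|P| lt le H => m ee pp lt le H.
  rewrite leqNgt; apply/negP=> h.
  have : 4 * k * pp <= m by lia.
  move/H; lia.
have hdeg X : X \in P -> 2 * k < #|Nbr E X|.
  move=> XP; have [le1 le2] := card_delV vM X.
  have cP : #|P| = (#|P :\ X|).+1 by rewrite (cardsD1 X P) XP.
  have H := hm (P :\ X) (delV E X) (valid_delV vM X).
  move: #|delV E X| #|P :\ X| #|Nbr E X| #|E| #|P| eP P2 le1 le2 cP H => m q d ee pp eP P2 le1 le2 cP H.
  rewrite ltnNge; apply/negP=> hd; subst pp.
  have : 4 * k * q <= m by lia.
  have : 0 < q by lia.
  move=> /H h /h; lia.
have hcom X Y : (X, Y) \in E -> 2 * k <= #|Nbr E X :&: Nbr E Y|.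
  move=> XYE; have cP := card_Pc vM XYE; have le1 := card_Ec_le E X Y.
  have le2 := card_Ec_ge vM XYE.
  have H := hm _ _ (valid_contr esym vM XYE).
  move: #|Ec E X Y| #|Pc P X Y| #|Nbr E X :&: Nbr E Y| #|E| #|P| eP P2 le1 le2 cP H => m q c ee pp eP P2 le1 le2 cP H.
  rewrite leqNgt; apply/negP=> hc; subst pp.
  have : 4 * k * q <= m by lia.
  have : 0 < q by lia.
  move=> /H h /h; lia.
have [X1 X1P] : exists X1, X1 \in P.
  by apply/set0Pn; rewrite -card_gt0; lia.
have [X0 [X0P [md _]]] := mindeg_exists E X1P.
exists P, E, X0; split=> //.
  apply/andP; split; first exact: hdeg.
  have := mindeg_bound vM md.
  move: #|Nbr E X0| #|P| #|E| hE P2 => d pp ee hE P2 h.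
  rewrite leqNgt; apply/negP=> hd; nia.
move=> Y; rewrite inE => XYE; rewrite setIC; exact: hcom.
Qed.

Lemma stage2 k (g : nat -> nat) (P0 : {set {set G}}) (E0 : {set {set G} * {set G}}) :
  validM e P0 E0 -> k <= #|P0| <= 4 * k -> 2 * g #|P0| <= #|E0| ->
  k * (k - 1) < 2 * g k ->
  (forall v d D, k < v -> v <= 4 * k -> d * v <= 2 * g v + 1 -> D <= d -> d < v ->
      g v < g (v - 1) + D -> OK (d + 1) D k || OK v d k) ->
  exists P E d, [/\ validM e P E, mindegM P E d, OK #|P| d k & #|P| <= 4 * k].
Proof.
move=> v0 /andP[p0 p0'] e0 H0 Hstep.
pose fam (M : {set {set G}} * {set {set G} * {set G}}) :=
  [&& validM e M.1 M.2, k <= #|M.1| <= 4 * k & 2 * g #|M.1| <= #|M.2|].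
have f0 : fam (P0, E0) by rewrite /fam /= v0 p0 p0' e0.
have [[P E] [/and3P[vM /andP[pP pP'] eP] hmin]] :=
  @min_exists _ fam (fun M : {set {set G}} * {set {set G} * {set G}} => #|M.1| + #|M.2|) _ f0.
rewrite /= in pP pP' eP hmin.
have hm P' E' : validM e P' E' -> k <= #|P'| -> #|P'| <= 4 * k -> 2 * g #|P'| <= #|E'| ->
    #|P| + #|E| <= #|P'| + #|E'|.
  by move=> a b c d; apply: (hmin (P', E')); rewrite /fam /= a b c d.
have kP : k < #|P|.
  rewrite ltn_neqAle pP andbT; apply/negP=> /eqP kP.
  have := E_bound vM; move: eP; rewrite -kP.
  move: #|E| H0 => ee; lia.
have hE : #|E| <= 2 * g #|P| + 1.
  case: (set_0Vmem E) => [E0'|[p pE]]; first by rewrite E0' cards0.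
  have [lt le] := card_delE vM pE.
  have H := hm P (delE E p) (valid_delE vM p) pP pP'.
  move: #|delE E p| #|E| #|P| lt le H => m ee pp lt le H.
  rewrite leqNgt; apply/negP=> h.
  have : 2 * g pp <= m by lia.
  move/H; lia.
have hdeg X : X \in P -> g #|P| < g (#|P| - 1) + #|Nbr E X|.
  move=> XP; have [le1 le2] := card_delV vM X.
  have cP : #|P :\ X| = #|P| - 1 by rewrite (cardsD1 X P) XP add1n subn1.
  have H := hm (P :\ X) (delV E X) (valid_delV vM X).
  rewrite cP in H.
  have q1 : k <= #|P| - 1 by move: kP; move: #|P| => pp; lia.
  have q2 : #|P| - 1 <= 4 * k by move: pP'; move: #|P| => pp; lia.
  move: (H q1 q2); rewrite -cP.
  move: #|delV E X| #|P :\ X| #|Nbr E X| #|E| #|P| eP kP le1 le2 cP => m q d ee pp eP kP le1 le2 cP H'.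
  rewrite ltnNge; apply/negP=> hd.
  have : 2 * g q <= m by lia.
  move/H'; lia.
have hcom X Y : (X, Y) \in E -> g #|P| < g (#|P| - 1) + #|Nbr E X :&: Nbr E Y|.+1.
  move=> XYE; have cP := card_Pc vM XYE; have le1 := card_Ec_le E X Y.
  have le2 := card_Ec_ge vM XYE.
  have H := hm _ _ (valid_contr esym vM XYE).
  have cP' : #|Pc P X Y| = #|P| - 1 by rewrite -cP subn1.
  have q1 : k <= #|Pc P X Y| by move: cP' kP; move: #|Pc P X Y| #|P| => a b; lia.
  have q2 : #|Pc P X Y| <= 4 * k by move: cP' pP'; move: #|Pc P X Y| #|P| => a b; lia.
  move: (H q1 q2); rewrite cP'.
  move: #|Ec E X Y| #|Pc P X Y| #|Nbr E X :&: Nbr E Y| #|E| #|P| eP kP le1 le2 cP => m q c ee pp eP kP le1 le2 cP H'.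
  rewrite ltnNge; apply/negP=> hc.
  have : 2 * g (pp - 1) <= m by lia.
  move/H'; lia.
have [X1 X1P] : exists X1, X1 \in P.
  by apply/set0Pn; rewrite -card_gt0; lia.
have [x0 [x0P mP]] := mindeg_exists E X1P.
have md := mP.1.
set d := #|Nbr E x0| in md mP.
have dv : d * #|P| <= 2 * g #|P| + 1 by apply: leq_trans (mindeg_bound vM md) hE.
have dlt : d < #|P| by exact (deg_lt vM x0P).
set Q := x0 |: Nbr E x0.
have sQ : Q \subset P.
  apply/subsetP=> Z; rewrite !inE => /orP[/eqP->//|xZE].
  by case/and5P: (vM_edge vM xZE).
have vQ := valid_indE vM sQ.
have x0N : x0 \notin Nbr E x0.
  by rewrite inE; apply/negP=> /(vM_edge vM) /and5P[_ _ /eqP].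
have cQ : #|Q| = d.+1 by rewrite cardsU1 x0N.
have x0Q : x0 \in Q by rewrite !inE eqxx.
have [Z0 [Z0Q mQ]] := mindeg_exists (indE E Q) x0Q.
have mdQ := mQ.1.
set D := #|Nbr (indE E Q) Z0| in mdQ mQ.
have Dd : D <= d.
  have := mdQ x0 x0Q; rewrite Nbr_indE // => h; apply: leq_trans h _.
  by apply: subset_leq_card; apply: subsetIl.
have hD : g #|P| < g (#|P| - 1) + D.
  move: Z0Q; rewrite {1}/Q !inE => /orP[/eqP eZ|xZ].
    by rewrite /D eZ Nbr_indE // (setIidPl _) ?hdeg //; apply/subsetP=> Z ZN; rewrite /Q in_setU1 ZN orbT.
  have := hcom _ _ xZ; rewrite /D Nbr_indE; last by rewrite !inE xZ orbT.
  move=> h; apply: (leq_trans h); rewrite leq_add2l.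
  have -> : Nbr E Z0 :&: Q = x0 |: (Nbr E Z0 :&: Nbr E x0).
    apply/setP=> W; rewrite !inE.
    case: (eqVneq W x0) => [->|nW] /=; last by [].
    by rewrite -(vM_sym vM) xZ.
  rewrite cardsU1 in_setI (negbTE x0N) andbF add1n setIC.
  by [].
have := Hstep #|P| d D kP pP' dv Dd dlt hD.
case/orP=> hok.
  exists Q, (indE E Q), D; split=> //.
    by rewrite cQ -addn1.
  rewrite cQ; move: dlt pP'; move: #|P| => pp; lia.
by exists P, E, d; split.
Qed.

End Stages.


Section Final.
Variables (G : finType) (e : rel G).
Hypothesis sg : simple_graph e.

Definition P0 : {set {set G}} := [set [set x] | x : G].
Definition E0 : {set {set G} * {set G}} :=
  [set ([set p.1], [set p.2]) | p in [set p : G * G | e p.1 p.2]].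

Lemma valid0 : validM e P0 E0.
Proof.
case: sg => esym eirr.
apply: validM_mk.
- move=> X /imsetP[x _ ->]; rewrite connB1 andbT.
  by apply/set0Pn; exists x; rewrite inE.
- move=> X Y /imsetP[x _ ->] /imsetP[y _ ->] nxy.
  rewrite disjoints_subset; apply/subsetP=> z; rewrite !inE => /eqP->.
  by apply: contra nxy => /eqP->.
- move=> X Y /imsetP[[x y]]; rewrite inE /= => exy [-> ->].
  rewrite !imset_f //=.
  have nxy : x != y by apply: contraTneq exy => ->; rewrite eirr.
  rewrite (inj_eq set1_inj) nxy /=.
  apply/andP; split.
    by apply/imsetP; exists (y, x); rewrite // inE /= esym.
  by apply/existsP; exists x; rewrite inE eqxx /=; apply/existsP; exists y; rewrite inE eqxx.
Qed.

Lemma card_P0 : #|P0| = #|G|.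
Proof. by rewrite card_imset //; apply: set1_inj. Qed.

Lemma card_E0 : #|E0| = \sum_(v : G) deg e v.
Proof.
rewrite card_imset; last first.
  by move=> [a b] [c d] /= [/set1_inj -> /set1_inj ->].
rewrite -sum1_card (partition_big (fun p : G * G => p.1) (fun _ => true)) //=.
apply: eq_bigr => x _; rewrite /deg.
rewrite -(card_imset [set y | e x y] (fun a b (h : (x, a) = (x, b)) => congr1 snd h)).
rewrite -sum1_card; apply: eq_bigl => -[a b]; rewrite inE /=.
apply/andP/imsetP.
  by case=> eab /eqP eax; subst a; exists b; rewrite ?inE.
by case=> y; rewrite inE => exy [-> ->]; rewrite exy eqxx.
Qed.

Local Notation Hsig P := {X : {set G} | X \in P}.

Lemma out k (P : {set {set G}}) (E : {set {set G} * {set G}}) d :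
  validM e P E -> mindegM P E d -> OK #|P| d k -> #|P| <= 4 * k ->
  exists (H : finType) (eH : rel H) (n delta : nat),
       [/\ simple_graph eH, is_minor e eH, n = #|H| & is_min_degree eH delta] /\
       [/\ 6273 * n <= 10000 * delta,
           10000 * n + 5773 * k <= 10000 * (2 * delta),
           k <= delta, delta < n & n <= 4 * k].
Proof.
move=> vM [md [X0 X0P dX0]] hok p4.
pose eH := fun a b : Hsig P => (val a, val b) \in E.
have degH a : deg eH a = #|Nbr E (val a)|.
  rewrite /deg -(card_imset _ val_inj); apply: eq_card => Y; rewrite [in RHS]inE.
  apply/imsetP/idP.
    by case=> b; rewrite inE => h ->.
  move=> XYE; have YP : Y \in P by case/and5P: (vM_edge vM XYE).
  by exists (exist _ Y YP); rewrite ?inE.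
have cH : #|{: Hsig P}| = #|P|.
  by rewrite card_sig; apply: eq_card => X; rewrite !inE.
exists (Hsig P : finType), eH, #|P|, d; split; [split|].
- split.
    by move=> a b; rewrite /eH (vM_sym vM).
  by move=> a; rewrite /eH; apply/negP=> /(vM_edge vM) /and5P[_ _ /eqP].
- exists val; split.
  + by move=> a; case/andP: (vM_vert vM (valP a)).
  + by move=> a; case/andP: (vM_vert vM (valP a)) => _ /connBP.
  + by move=> a b nab; apply: (vM_disj vM (valP a) (valP b)); apply: contra nab => /eqP /val_inj ->.
  + move=> a b /(vM_edge vM) /and5P[_ _ _ _ /existsP[x /andP[xa /existsP[y /andP[yb exy]]]]].
    by exists x, y.
- by rewrite cH.
- split.
    by move=> a; rewrite degH; apply: md (valP a).
  by exists (exist _ X0 X0P); rewrite degH.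
have dlt : d < #|P| by rewrite -dX0; exact (deg_lt vM X0P).
move: hok; rewrite /OK => /and3P[h1 h2 h3].
rewrite (_ : 6273 = 9*17*41) // (_ : 10000 = 100*100) // (_ : 5773 = 23*251) //.
move: #|P| h1 h2 h3 dlt p4 => n h1 h2 h3 dlt p4.
split; lia.
Qed.


Theorem main_gen k (g : nat -> nat) :
  0 < k -> 0 < #|G| -> 4 * k * #|G| <= \sum_(v : G) deg e v ->
  k * (k - 1) < 2 * g k ->
  (forall v d D, k < v -> v <= 4 * k -> d * v <= 2 * g v + 1 -> D <= d -> d < v ->
      g v < g (v - 1) + D -> OK (d + 1) D k || OK v d k) ->
  (forall n, 2 * k < n -> n <= 4 * k -> ~~ OK n (2 * k) k -> g n <= k * n) ->
  exists (H : finType) (eH : rel H) (n delta : nat),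
       [/\ simple_graph eH, is_minor e eH, n = #|H| & is_min_degree eH delta] /\
       [/\ 6273 * n <= 10000 * delta,
           10000 * n + 5773 * k <= 10000 * (2 * delta),
           k <= delta, delta < n & n <= 4 * k].
Proof.
move=> k0 G0 hs H0 Hstep HF.
have esym := sg.1.
have [P [E [X0 [vM X0P /andP[n1 n2] hc]]]] :
    exists P E X0, [/\ validM e P E, X0 \in P, 2 * k < #|Nbr E X0| <= 4 * k &
     forall Y, Y \in Nbr E X0 -> 2 * k <= #|Nbr E Y :&: Nbr E X0| ].
  apply: (stage1 esym k0 valid0); first by rewrite card_P0.
  by rewrite card_P0 card_E0.
set Q := Nbr E X0 in n1 n2 hc.
have sQ : Q \subset P.
  by apply/subsetP=> Z; rewrite inE => /(vM_edge vM) /and5P[].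
have vF := valid_indE vM sQ.
have degF Y : Y \in Q -> 2 * k <= #|Nbr (indE E Q) Y|.
  by move=> YQ; rewrite Nbr_indE //; apply: hc.
have [Y1 Y1Q] : exists Y1, Y1 \in Q.
  by apply/set0Pn; rewrite -card_gt0; move: n1; move: #|Q| => q; lia.
have [Z0 [Z0Q mF]] := mindeg_exists (indE E Q) Y1Q.
have dF : 2 * k <= #|Nbr (indE E Q) Z0| by apply: degF.
case hok : (OK #|Q| (2 * k) k).
  apply: (out vF mF); first exact: OK_mono hok dF.
  exact: n2.
have eF : 2 * k * #|Q| <= #|indE E Q| by exact (mindeg_bound vF degF).
have hg := HF #|Q| n1 n2 (negbT hok).
have [P' [E' [d' [vM' md' hok' p4']]]] :
    exists P E d, [/\ validM e P E, mindegM P E d, OK #|P| d k & #|P| <= 4 * k].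
  apply: (stage2 esym (g := g) vF) => //.
    by apply/andP; split; move: n1 n2; move: #|Q| => q; lia.
  move: eF hg; move: #|Q| #|indE E Q| => q m; lia.
exact: out vM' md' hok' p4'.
Qed.

End Final.


Definition gc (k v : nat) : nat := (8 * k * v + (v - 2 * k) ^ 2 - 4 * k ^ 2 + 7) %/ 8.

Lemma gc_bounds k v : k <= v ->
  8 * k * v + (v - 2 * k) ^ 2 - 4 * k ^ 2 <= 8 * gc k v /\ 8 * gc k v <= 8 * k * v + (v - 2 * k) ^ 2 - 4 * k ^ 2 + 7.
Proof.
move=> kv; rewrite /gc.
set X := (8 * k * v + (v - 2 * k) ^ 2 - 4 * k ^ 2).
have := divn_eq (X + 7) 8; have := ltn_pmod (X + 7) (isT : 0 < 8).
lia.
Qed.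

Lemma step_small k v d D : 60 <= k -> k < v -> v <= 2 * k ->
  d * v <= 2 * gc k v + 1 -> D <= d -> gc k v < gc k (v - 1) + D ->
  OK (d + 1) D k || OK v d k.
Proof.
move=> k60 kv v2k dv Dd hg.
have := gc_bounds (ltnW kv); have : k <= v - 1 by lia. move=> /gc_bounds.
have -> : v - 1 - 2 * k = 0 by lia.
have -> : v - 2 * k = 0 by lia.
have e1 : 8 * k * (v - 1) = 8 * k * v - 8 * k.
  by rewrite mulnBr muln1.
rewrite e1 => h1 h2.
have hD : k + 1 <= D.
  have hx : 8 * k ^ 2 + 8 * k <= 8 * k * v.
    have hh : 8 * k * (k + 1) <= 8 * k * v by apply: leq_mul => //; lia.
    by move: hh; rewrite expnS expn1; lia.
  move: (gc k v) (gc k (v - 1)) (8 * k * v) (k ^ 2) h1 h2 hg hx => a b x y h1 h2 hg hx.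
  lia.
rewrite /OK.
have [hd|hd] : (100*100) * d <= (100*142+27) * k + 100*100 \/
               (100*142+27) * k + 100*100 < (100*100) * d by lia.
  apply/orP; left; apply/and3P; split; lia.
apply/orP; right; apply/and3P; split; lia.
Qed.

Lemma step_mid k w d D : 60 <= k -> 1 <= w -> 2 * w <= k ->
  8 * D >= 8 * k + 2 * w -> D <= d ->
  OK (d + 1) D k || OK (2 * k + w) d k.
Proof.
move=> k60 w1 wk hD Dd.
rewrite /OK.
have [hd|hd] : (100*100) * (d+1) <= (100*142+27) * k + 50*100 * w \/
               (100*142+27) * k + 50*100 * w < (100*100) * (d+1) by lia.
  apply/orP; left; apply/and3P; split; lia.
apply/orP; right; apply/and3P; split; lia.
Qed.

Lemma step_big k w d D : 60 <= k -> k <= 2 * w -> w <= 2 * k ->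
  8 * D >= 8 * k + 2 * w -> D <= d ->
  8 * d * (2 * k + w) <= 24 * k ^ 2 + 16 * k * w + 2 * w ^ 2 + 22 ->
  OK (d + 1) D k.
Proof.
move=> k60 w1 wk hD Dd hq.
have kk : k * k >= 60 * k by nia.
have kw : k * w >= 60 * w by nia.
have ww : w * w >= 30 * w by nia.
have kw2 : 2 * (k * w) >= k * k by nia.
have ww2 : 2 * (w * w) >= k * w by nia.
rewrite /OK; apply/and3P; split; last lia.
  have [h|h] : (8*9*17*41) * (d+1) <= (800*100) * k + (200*100) * w \/ (800*100) * k + (200*100) * w < (8*9*17*41) * (d+1) by lia.
    lia.
  have := leq_mul h (leqnn (8 * (2 * k + w))). lia.
have [h|h] : (800*100) * (d+1) <= (800*100+338*100+16) * k + (400*100) * w \/ (800*100+338*100+16) * k + (400*100) * w < (800*100) * (d+1) by lia.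
  lia.
have := leq_mul h (leqnn (8 * (2 * k + w))). lia.
Qed.

Lemma sq_pred w : 1 <= w -> (w - 1) ^ 2 + 2 * w = w ^ 2 + 1.
Proof. by case: w => // w' _; rewrite subSS subn0; nia. Qed.

Lemma step_closed k v d D : 60 <= k -> k < v -> v <= 4 * k ->
  d * v <= 2 * gc k v + 1 -> D <= d -> d < v -> gc k v < gc k (v - 1) + D ->
  OK (d + 1) D k || OK v d k.
Proof.
move=> k60 kv v4k dv Dd _ hg.
have [v2k|v2k] : v <= 2 * k \/ 2 * k < v by lia.
  exact: step_small.
have := gc_bounds (ltnW kv); have : k <= v - 1 by lia. move=> /gc_bounds.
have [u ev] : exists u, v = 2 * k + u.+1 by exists (v - 2 * k).-1; lia.
subst v.
have -> : 2 * k + u.+1 - 1 - 2 * k = u by lia.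
have -> : 2 * k + u.+1 - 2 * k = u.+1 by lia.
have e2 : 2 * k + u.+1 - 1 = 2 * k + u by lia.
rewrite e2; rewrite e2 in hg.
move: (gc k (2 * k + u)) (gc k (2 * k + u.+1)) hg dv => g1 g2 hg dv h1 h2.
rewrite !expnS !expn0 !muln1 in h1 h2 *.
have hD : 8 * D >= 8 * k + 2 * u.+1 by lia.
have [wk|wk] : 2 * u.+1 <= k \/ k < 2 * u.+1 by lia.
  have := @step_mid k u.+1 d D k60 (ltn0Sn _) wk hD Dd.
  by [].
apply/orP; left; apply: (step_big k60 (ltnW wk)) => //; first lia.
lia.
Qed.

Lemma H0_closed k : 0 < k -> k * (k - 1) < 2 * gc k k.
Proof.
move=> k0; have := gc_bounds (leqnn k).
have -> : k - 2 * k = 0 by lia.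
move: (gc k k) => g; nia.
Qed.

Lemma HF_closed k n : k <= n -> n <= 4 * k -> gc k n <= k * n.
Proof.
move=> kn n4; have := gc_bounds kn.
have : (n - 2 * k) ^ 2 <= 4 * k ^ 2.
  have : n - 2 * k <= 2 * k by lia.
  move: (n - 2 * k) => m hm; nia.
move: (gc k n) ((n - 2 * k) ^ 2) => g s; nia.
Qed.

Module TabM.
Import NArith.

Definition OKN (n d k : N) : bool :=
  N.leb (6273 * n)%num (10000 * d)%num && N.leb (10000 * n + 5773 * k)%num (20000 * d)%num && N.leb k d.

Lemma OKN_OK n d k : OKN (N.of_nat n) (N.of_nat d) (N.of_nat k) = OK n d k.
Proof.
rewrite /OKN /OK.
have l1 : N.leb (6273 * N.of_nat n)%num (10000 * N.of_nat d)%num = ((9*17*41) * n <= (100*100) * d).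
  apply/idP/idP => h.
    move/N.leb_le: h => h; lia.
  apply/N.leb_le; lia.
have l2 : N.leb (10000 * N.of_nat n + 5773 * N.of_nat k)%num (20000 * N.of_nat d)%num =
    ((100*100) * n + (23*251) * k <= (200*100) * d).
  apply/idP/idP => h.
    move/N.leb_le: h => h; lia.
  apply/N.leb_le; lia.
have l3 : N.leb (N.of_nat k) (N.of_nat d) = (k <= d).
  apply/idP/idP => h.
    move/N.leb_le: h => h; lia.
  apply/N.leb_le; lia.
by rewrite l1 l2 l3 -andbA.
Qed.
Definition tabsN : seq (seq N) := [:: 
[::];
[:: 1%num; 2%num; 3%num; 4%num];
[:: 2%num; 4%num; 6%num; 8%num; 10%num; 12%num; 14%num];
[:: 4%num; 6%num; 8%num; 10%num; 12%num; 14%num; 16%num; 18%num; 20%num; 22%num];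
[:: 7%num; 10%num; 13%num; 16%num; 19%num; 23%num; 27%num; 31%num; 35%num; 39%num; 43%num; 47%num; 51%num];
[:: 11%num; 15%num; 19%num; 23%num; 27%num; 31%num; 35%num; 39%num; 43%num; 47%num; 51%num; 55%num; 60%num; 65%num; 70%num; 75%num];
[:: 16%num; 21%num; 26%num; 31%num; 36%num; 41%num; 46%num; 51%num; 57%num; 63%num; 69%num; 75%num; 81%num; 87%num; 93%num; 99%num; 105%num; 111%num; 117%num];
[:: 22%num; 28%num; 34%num; 40%num; 46%num; 52%num; 58%num; 65%num; 72%num; 79%num; 86%num; 93%num; 100%num; 107%num; 114%num; 122%num; 130%num; 138%num; 146%num; 154%num; 162%num; 170%num];
[:: 29%num; 36%num; 43%num; 50%num; 57%num; 64%num; 71%num; 78%num; 85%num; 92%num; 100%num; 108%num; 116%num; 124%num; 132%num; 140%num; 148%num; 156%num; 164%num; 172%num; 180%num; 189%num; 198%num; 207%num; 216%num];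
[:: 37%num; 45%num; 53%num; 61%num; 69%num; 77%num; 85%num; 93%num; 101%num; 109%num; 118%num; 127%num; 136%num; 145%num; 154%num; 163%num; 172%num; 181%num; 191%num; 201%num; 211%num; 221%num; 231%num; 241%num; 251%num; 261%num; 271%num; 281%num];
[:: 46%num; 55%num; 64%num; 73%num; 82%num; 91%num; 100%num; 109%num; 118%num; 127%num; 136%num; 145%num; 154%num; 164%num; 174%num; 184%num; 194%num; 204%num; 214%num; 224%num; 234%num; 244%num; 254%num; 265%num; 276%num; 287%num; 298%num; 309%num; 320%num; 331%num; 342%num];
[:: 56%num; 66%num; 76%num; 86%num; 96%num; 106%num; 116%num; 126%num; 136%num; 146%num; 156%num; 166%num; 176%num; 187%num; 198%num; 209%num; 220%num; 231%num; 242%num; 253%num; 265%num; 277%num; 289%num; 301%num; 313%num; 325%num; 337%num; 349%num; 361%num; 373%num; 385%num; 397%num; 410%num; 423%num];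
[:: 67%num; 78%num; 89%num; 100%num; 111%num; 122%num; 133%num; 144%num; 155%num; 166%num; 177%num; 188%num; 199%num; 210%num; 221%num; 232%num; 244%num; 256%num; 268%num; 280%num; 292%num; 304%num; 316%num; 328%num; 340%num; 353%num; 366%num; 379%num; 392%num; 405%num; 418%num; 431%num; 444%num; 457%num; 470%num; 483%num; 496%num];
[:: 79%num; 91%num; 103%num; 115%num; 127%num; 139%num; 151%num; 163%num; 175%num; 187%num; 199%num; 211%num; 223%num; 235%num; 247%num; 259%num; 272%num; 285%num; 298%num; 311%num; 324%num; 337%num; 351%num; 365%num; 379%num; 393%num; 407%num; 421%num; 435%num; 449%num; 463%num; 477%num; 491%num; 505%num; 520%num; 535%num; 550%num; 565%num; 580%num; 595%num];
[:: 92%num; 105%num; 118%num; 131%num; 144%num; 157%num; 170%num; 183%num; 196%num; 209%num; 222%num; 235%num; 248%num; 261%num; 274%num; 287%num; 301%num; 315%num; 329%num; 343%num; 358%num; 373%num; 388%num; 403%num; 418%num; 433%num; 448%num; 463%num; 478%num; 493%num; 509%num; 525%num; 541%num; 557%num; 573%num; 589%num; 605%num; 621%num; 637%num; 653%num; 669%num; 685%num; 702%num];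
[:: 106%num; 120%num; 134%num; 148%num; 162%num; 176%num; 190%num; 204%num; 218%num; 232%num; 246%num; 260%num; 274%num; 288%num; 302%num; 316%num; 330%num; 344%num; 358%num; 373%num; 388%num; 403%num; 418%num; 433%num; 449%num; 465%num; 481%num; 497%num; 513%num; 529%num; 545%num; 561%num; 577%num; 593%num; 609%num; 626%num; 643%num; 660%num; 677%num; 694%num; 711%num; 728%num; 745%num; 762%num; 779%num; 796%num];
[:: 121%num; 136%num; 151%num; 166%num; 181%num; 196%num; 211%num; 226%num; 241%num; 256%num; 271%num; 286%num; 301%num; 316%num; 331%num; 346%num; 361%num; 376%num; 391%num; 407%num; 423%num; 439%num; 455%num; 472%num; 489%num; 506%num; 523%num; 540%num; 557%num; 574%num; 591%num; 608%num; 626%num; 644%num; 662%num; 680%num; 698%num; 716%num; 734%num; 752%num; 770%num; 788%num; 806%num; 824%num; 843%num; 862%num; 881%num; 900%num; 919%num];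
[:: 137%num; 153%num; 169%num; 185%num; 201%num; 217%num; 233%num; 249%num; 265%num; 281%num; 297%num; 313%num; 329%num; 345%num; 361%num; 377%num; 393%num; 409%num; 425%num; 441%num; 457%num; 473%num; 490%num; 507%num; 524%num; 541%num; 558%num; 576%num; 594%num; 612%num; 630%num; 648%num; 666%num; 684%num; 702%num; 720%num; 738%num; 757%num; 776%num; 795%num; 814%num; 833%num; 852%num; 871%num; 890%num; 909%num; 928%num; 947%num; 966%num; 985%num; 1004%num; 1024%num];
[:: 154%num; 171%num; 188%num; 205%num; 222%num; 239%num; 256%num; 273%num; 290%num; 307%num; 324%num; 341%num; 358%num; 375%num; 392%num; 409%num; 426%num; 443%num; 460%num; 477%num; 494%num; 511%num; 529%num; 547%num; 565%num; 583%num; 602%num; 621%num; 640%num; 659%num; 678%num; 697%num; 716%num; 735%num; 755%num; 775%num; 795%num; 815%num; 835%num; 855%num; 875%num; 895%num; 915%num; 935%num; 955%num; 975%num; 996%num; 1017%num; 1038%num; 1059%num; 1080%num; 1101%num; 1122%num; 1143%num; 1164%num];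
[:: 172%num; 190%num; 208%num; 226%num; 244%num; 262%num; 280%num; 298%num; 316%num; 334%num; 352%num; 370%num; 388%num; 406%num; 424%num; 442%num; 460%num; 478%num; 496%num; 514%num; 532%num; 550%num; 568%num; 586%num; 604%num; 623%num; 642%num; 661%num; 680%num; 700%num; 720%num; 740%num; 760%num; 780%num; 800%num; 820%num; 840%num; 860%num; 880%num; 901%num; 922%num; 943%num; 964%num; 985%num; 1006%num; 1027%num; 1048%num; 1069%num; 1090%num; 1111%num; 1132%num; 1153%num; 1175%num; 1197%num; 1219%num; 1241%num; 1263%num; 1285%num];
[:: 191%num; 210%num; 229%num; 248%num; 267%num; 286%num; 305%num; 324%num; 343%num; 362%num; 381%num; 400%num; 419%num; 438%num; 457%num; 476%num; 495%num; 514%num; 533%num; 552%num; 571%num; 590%num; 609%num; 628%num; 647%num; 667%num; 687%num; 707%num; 728%num; 749%num; 770%num; 791%num; 812%num; 833%num; 854%num; 875%num; 897%num; 919%num; 941%num; 963%num; 985%num; 1007%num; 1029%num; 1051%num; 1073%num; 1095%num; 1117%num; 1140%num; 1163%num; 1186%num; 1209%num; 1232%num; 1255%num; 1278%num; 1301%num; 1324%num; 1347%num; 1370%num; 1393%num; 1416%num; 1439%num];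
[:: 211%num; 231%num; 251%num; 271%num; 291%num; 311%num; 331%num; 351%num; 371%num; 391%num; 411%num; 431%num; 451%num; 471%num; 491%num; 511%num; 531%num; 551%num; 571%num; 591%num; 611%num; 631%num; 651%num; 671%num; 691%num; 712%num; 733%num; 754%num; 775%num; 797%num; 819%num; 841%num; 863%num; 885%num; 908%num; 931%num; 954%num; 977%num; 1000%num; 1023%num; 1046%num; 1069%num; 1092%num; 1115%num; 1139%num; 1163%num; 1187%num; 1211%num; 1235%num; 1259%num; 1283%num; 1307%num; 1331%num; 1355%num; 1379%num; 1403%num; 1428%num; 1453%num; 1478%num; 1503%num; 1528%num; 1553%num; 1578%num; 1603%num];
[:: 232%num; 253%num; 274%num; 295%num; 316%num; 337%num; 358%num; 379%num; 400%num; 421%num; 442%num; 463%num; 484%num; 505%num; 526%num; 547%num; 568%num; 589%num; 610%num; 631%num; 652%num; 673%num; 694%num; 715%num; 736%num; 757%num; 778%num; 799%num; 821%num; 843%num; 865%num; 888%num; 911%num; 934%num; 957%num; 980%num; 1003%num; 1026%num; 1049%num; 1073%num; 1097%num; 1121%num; 1145%num; 1169%num; 1193%num; 1217%num; 1241%num; 1265%num; 1289%num; 1314%num; 1339%num; 1364%num; 1389%num; 1414%num; 1439%num; 1464%num; 1489%num; 1514%num; 1539%num; 1564%num; 1589%num; 1614%num; 1640%num; 1666%num; 1692%num; 1718%num; 1744%num];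
[:: 254%num; 276%num; 298%num; 320%num; 342%num; 364%num; 386%num; 408%num; 430%num; 452%num; 474%num; 496%num; 518%num; 540%num; 562%num; 584%num; 606%num; 628%num; 650%num; 672%num; 694%num; 716%num; 738%num; 760%num; 782%num; 804%num; 826%num; 848%num; 871%num; 894%num; 917%num; 940%num; 964%num; 988%num; 1012%num; 1036%num; 1060%num; 1085%num; 1110%num; 1135%num; 1160%num; 1185%num; 1210%num; 1235%num; 1260%num; 1285%num; 1310%num; 1336%num; 1362%num; 1388%num; 1414%num; 1440%num; 1466%num; 1492%num; 1518%num; 1544%num; 1570%num; 1596%num; 1623%num; 1650%num; 1677%num; 1704%num; 1731%num; 1758%num; 1785%num; 1812%num; 1839%num; 1866%num; 1893%num; 1920%num];
[:: 277%num; 300%num; 323%num; 346%num; 369%num; 392%num; 415%num; 438%num; 461%num; 484%num; 507%num; 530%num; 553%num; 576%num; 599%num; 622%num; 645%num; 668%num; 691%num; 714%num; 737%num; 760%num; 783%num; 806%num; 829%num; 852%num; 875%num; 898%num; 921%num; 944%num; 967%num; 991%num; 1015%num; 1039%num; 1064%num; 1089%num; 1114%num; 1139%num; 1164%num; 1189%num; 1214%num; 1240%num; 1266%num; 1292%num; 1318%num; 1344%num; 1370%num; 1396%num; 1422%num; 1448%num; 1474%num; 1501%num; 1528%num; 1555%num; 1582%num; 1609%num; 1636%num; 1663%num; 1690%num; 1717%num; 1744%num; 1771%num; 1798%num; 1825%num; 1853%num; 1881%num; 1909%num; 1937%num; 1965%num; 1993%num; 2021%num; 2049%num; 2077%num]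;
[:: 301%num; 325%num; 349%num; 373%num; 397%num; 421%num; 445%num; 469%num; 493%num; 517%num; 541%num; 565%num; 589%num; 613%num; 637%num; 661%num; 685%num; 709%num; 733%num; 757%num; 781%num; 805%num; 829%num; 853%num; 877%num; 901%num; 925%num; 949%num; 973%num; 997%num; 1021%num; 1046%num; 1071%num; 1096%num; 1122%num; 1148%num; 1174%num; 1200%num; 1226%num; 1253%num; 1280%num; 1307%num; 1334%num; 1361%num; 1388%num; 1415%num; 1442%num; 1469%num; 1497%num; 1525%num; 1553%num; 1581%num; 1609%num; 1637%num; 1665%num; 1693%num; 1721%num; 1749%num; 1777%num; 1805%num; 1834%num; 1863%num; 1892%num; 1921%num; 1950%num; 1979%num; 2008%num; 2037%num; 2066%num; 2095%num; 2124%num; 2153%num; 2183%num; 2213%num; 2243%num; 2273%num];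
[:: 326%num; 351%num; 376%num; 401%num; 426%num; 451%num; 476%num; 501%num; 526%num; 551%num; 576%num; 601%num; 626%num; 651%num; 676%num; 701%num; 726%num; 751%num; 776%num; 801%num; 826%num; 851%num; 876%num; 901%num; 926%num; 951%num; 976%num; 1001%num; 1026%num; 1051%num; 1076%num; 1102%num; 1128%num; 1154%num; 1180%num; 1207%num; 1234%num; 1261%num; 1289%num; 1317%num; 1345%num; 1373%num; 1401%num; 1429%num; 1457%num; 1485%num; 1514%num; 1543%num; 1572%num; 1601%num; 1630%num; 1659%num; 1688%num; 1717%num; 1746%num; 1775%num; 1805%num; 1835%num; 1865%num; 1895%num; 1925%num; 1955%num; 1985%num; 2015%num; 2045%num; 2075%num; 2105%num; 2135%num; 2166%num; 2197%num; 2228%num; 2259%num; 2290%num; 2321%num; 2352%num; 2383%num; 2414%num; 2445%num; 2476%num];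
[:: 352%num; 378%num; 404%num; 430%num; 456%num; 482%num; 508%num; 534%num; 560%num; 586%num; 612%num; 638%num; 664%num; 690%num; 716%num; 742%num; 768%num; 794%num; 820%num; 846%num; 872%num; 898%num; 924%num; 950%num; 976%num; 1002%num; 1028%num; 1054%num; 1080%num; 1106%num; 1132%num; 1158%num; 1184%num; 1210%num; 1237%num; 1264%num; 1291%num; 1319%num; 1347%num; 1375%num; 1403%num; 1432%num; 1461%num; 1490%num; 1519%num; 1548%num; 1577%num; 1606%num; 1635%num; 1664%num; 1693%num; 1723%num; 1753%num; 1783%num; 1813%num; 1843%num; 1873%num; 1903%num; 1933%num; 1963%num; 1993%num; 2023%num; 2054%num; 2085%num; 2116%num; 2147%num; 2178%num; 2209%num; 2240%num; 2271%num; 2302%num; 2333%num; 2364%num; 2395%num; 2427%num; 2459%num; 2491%num; 2523%num; 2555%num; 2587%num; 2619%num; 2651%num];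
[:: 379%num; 406%num; 433%num; 460%num; 487%num; 514%num; 541%num; 568%num; 595%num; 622%num; 649%num; 676%num; 703%num; 730%num; 757%num; 784%num; 811%num; 838%num; 865%num; 892%num; 919%num; 946%num; 973%num; 1000%num; 1027%num; 1054%num; 1081%num; 1108%num; 1135%num; 1162%num; 1189%num; 1216%num; 1243%num; 1270%num; 1298%num; 1326%num; 1354%num; 1382%num; 1411%num; 1440%num; 1469%num; 1499%num; 1529%num; 1559%num; 1589%num; 1619%num; 1649%num; 1679%num; 1709%num; 1740%num; 1771%num; 1802%num; 1833%num; 1864%num; 1895%num; 1926%num; 1957%num; 1988%num; 2019%num; 2051%num; 2083%num; 2115%num; 2147%num; 2179%num; 2211%num; 2243%num; 2275%num; 2307%num; 2339%num; 2371%num; 2404%num; 2437%num; 2470%num; 2503%num; 2536%num; 2569%num; 2602%num; 2635%num; 2668%num; 2701%num; 2734%num; 2767%num; 2800%num; 2834%num; 2868%num];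
[:: 407%num; 435%num; 463%num; 491%num; 519%num; 547%num; 575%num; 603%num; 631%num; 659%num; 687%num; 715%num; 743%num; 771%num; 799%num; 827%num; 855%num; 883%num; 911%num; 939%num; 967%num; 995%num; 1023%num; 1051%num; 1079%num; 1107%num; 1135%num; 1163%num; 1191%num; 1219%num; 1247%num; 1275%num; 1303%num; 1331%num; 1359%num; 1387%num; 1415%num; 1444%num; 1473%num; 1502%num; 1532%num; 1562%num; 1592%num; 1623%num; 1654%num; 1685%num; 1716%num; 1747%num; 1778%num; 1809%num; 1840%num; 1871%num; 1902%num; 1934%num; 1966%num; 1998%num; 2030%num; 2062%num; 2094%num; 2126%num; 2158%num; 2190%num; 2222%num; 2255%num; 2288%num; 2321%num; 2354%num; 2387%num; 2420%num; 2453%num; 2486%num; 2519%num; 2552%num; 2585%num; 2618%num; 2651%num; 2685%num; 2719%num; 2753%num; 2787%num; 2821%num; 2855%num; 2889%num; 2923%num; 2957%num; 2991%num; 3025%num; 3059%num];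
[:: 436%num; 465%num; 494%num; 523%num; 552%num; 581%num; 610%num; 639%num; 668%num; 697%num; 726%num; 755%num; 784%num; 813%num; 842%num; 871%num; 900%num; 929%num; 958%num; 987%num; 1016%num; 1045%num; 1074%num; 1103%num; 1132%num; 1161%num; 1190%num; 1219%num; 1248%num; 1277%num; 1306%num; 1335%num; 1364%num; 1393%num; 1422%num; 1451%num; 1480%num; 1510%num; 1540%num; 1570%num; 1600%num; 1631%num; 1662%num; 1693%num; 1725%num; 1757%num; 1789%num; 1821%num; 1853%num; 1885%num; 1917%num; 1950%num; 1983%num; 2016%num; 2049%num; 2082%num; 2115%num; 2148%num; 2181%num; 2214%num; 2247%num; 2281%num; 2315%num; 2349%num; 2383%num; 2417%num; 2451%num; 2485%num; 2519%num; 2553%num; 2587%num; 2621%num; 2656%num; 2691%num; 2726%num; 2761%num; 2796%num; 2831%num; 2866%num; 2901%num; 2936%num; 2971%num; 3006%num; 3041%num; 3076%num; 3112%num; 3148%num; 3184%num; 3220%num; 3256%num; 3292%num];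
[:: 466%num; 496%num; 526%num; 556%num; 586%num; 616%num; 646%num; 676%num; 706%num; 736%num; 766%num; 796%num; 826%num; 856%num; 886%num; 916%num; 946%num; 976%num; 1006%num; 1036%num; 1066%num; 1096%num; 1126%num; 1156%num; 1186%num; 1216%num; 1246%num; 1276%num; 1306%num; 1336%num; 1366%num; 1396%num; 1426%num; 1456%num; 1486%num; 1516%num; 1546%num; 1576%num; 1606%num; 1636%num; 1667%num; 1698%num; 1729%num; 1761%num; 1793%num; 1825%num; 1858%num; 1891%num; 1924%num; 1957%num; 1990%num; 2023%num; 2056%num; 2089%num; 2122%num; 2156%num; 2190%num; 2224%num; 2258%num; 2292%num; 2326%num; 2360%num; 2394%num; 2428%num; 2462%num; 2497%num; 2532%num; 2567%num; 2602%num; 2637%num; 2672%num; 2707%num; 2742%num; 2777%num; 2812%num; 2847%num; 2882%num; 2918%num; 2954%num; 2990%num; 3026%num; 3062%num; 3098%num; 3134%num; 3170%num; 3206%num; 3242%num; 3278%num; 3314%num; 3350%num; 3386%num; 3423%num; 3460%num; 3497%num];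
[:: 497%num; 528%num; 559%num; 590%num; 621%num; 652%num; 683%num; 714%num; 745%num; 776%num; 807%num; 838%num; 869%num; 900%num; 931%num; 962%num; 993%num; 1024%num; 1055%num; 1086%num; 1117%num; 1148%num; 1179%num; 1210%num; 1241%num; 1272%num; 1303%num; 1334%num; 1365%num; 1396%num; 1427%num; 1458%num; 1489%num; 1520%num; 1551%num; 1582%num; 1613%num; 1644%num; 1675%num; 1706%num; 1738%num; 1770%num; 1802%num; 1835%num; 1868%num; 1901%num; 1934%num; 1968%num; 2002%num; 2036%num; 2070%num; 2104%num; 2138%num; 2173%num; 2208%num; 2243%num; 2278%num; 2313%num; 2348%num; 2383%num; 2418%num; 2453%num; 2488%num; 2524%num; 2560%num; 2596%num; 2632%num; 2668%num; 2704%num; 2740%num; 2776%num; 2812%num; 2848%num; 2884%num; 2921%num; 2958%num; 2995%num; 3032%num; 3069%num; 3106%num; 3143%num; 3180%num; 3217%num; 3254%num; 3291%num; 3328%num; 3366%num; 3404%num; 3442%num; 3480%num; 3518%num; 3556%num; 3594%num; 3632%num; 3670%num; 3708%num; 3746%num];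
[:: 529%num; 561%num; 593%num; 625%num; 657%num; 689%num; 721%num; 753%num; 785%num; 817%num; 849%num; 881%num; 913%num; 945%num; 977%num; 1009%num; 1041%num; 1073%num; 1105%num; 1137%num; 1169%num; 1201%num; 1233%num; 1265%num; 1297%num; 1329%num; 1361%num; 1393%num; 1425%num; 1457%num; 1489%num; 1521%num; 1553%num; 1585%num; 1617%num; 1649%num; 1681%num; 1713%num; 1745%num; 1777%num; 1810%num; 1843%num; 1876%num; 1909%num; 1943%num; 1977%num; 2011%num; 2046%num; 2081%num; 2116%num; 2151%num; 2187%num; 2223%num; 2259%num; 2295%num; 2331%num; 2367%num; 2403%num; 2439%num; 2475%num; 2512%num; 2549%num; 2586%num; 2623%num; 2660%num; 2697%num; 2734%num; 2771%num; 2808%num; 2845%num; 2882%num; 2920%num; 2958%num; 2996%num; 3034%num; 3072%num; 3110%num; 3148%num; 3186%num; 3224%num; 3262%num; 3300%num; 3339%num; 3378%num; 3417%num; 3456%num; 3495%num; 3534%num; 3573%num; 3612%num; 3651%num; 3690%num; 3729%num; 3768%num; 3807%num; 3847%num; 3887%num; 3927%num; 3967%num; 4007%num];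
[:: 562%num; 595%num; 628%num; 661%num; 694%num; 727%num; 760%num; 793%num; 826%num; 859%num; 892%num; 925%num; 958%num; 991%num; 1024%num; 1057%num; 1090%num; 1123%num; 1156%num; 1189%num; 1222%num; 1255%num; 1288%num; 1321%num; 1354%num; 1387%num; 1420%num; 1453%num; 1486%num; 1519%num; 1552%num; 1585%num; 1618%num; 1651%num; 1684%num; 1717%num; 1750%num; 1783%num; 1816%num; 1849%num; 1882%num; 1915%num; 1948%num; 1982%num; 2016%num; 2050%num; 2085%num; 2120%num; 2155%num; 2191%num; 2227%num; 2263%num; 2299%num; 2335%num; 2371%num; 2408%num; 2445%num; 2482%num; 2519%num; 2556%num; 2593%num; 2630%num; 2667%num; 2704%num; 2741%num; 2779%num; 2817%num; 2855%num; 2893%num; 2931%num; 2969%num; 3007%num; 3045%num; 3083%num; 3121%num; 3159%num; 3198%num; 3237%num; 3276%num; 3315%num; 3354%num; 3393%num; 3432%num; 3471%num; 3510%num; 3549%num; 3588%num; 3627%num; 3667%num; 3707%num; 3747%num; 3787%num; 3827%num; 3867%num; 3907%num; 3947%num; 3987%num; 4027%num; 4067%num; 4107%num; 4147%num; 4188%num; 4229%num];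
[:: 596%num; 630%num; 664%num; 698%num; 732%num; 766%num; 800%num; 834%num; 868%num; 902%num; 936%num; 970%num; 1004%num; 1038%num; 1072%num; 1106%num; 1140%num; 1174%num; 1208%num; 1242%num; 1276%num; 1310%num; 1344%num; 1378%num; 1412%num; 1446%num; 1480%num; 1514%num; 1548%num; 1582%num; 1616%num; 1650%num; 1684%num; 1718%num; 1752%num; 1786%num; 1820%num; 1854%num; 1888%num; 1922%num; 1956%num; 1990%num; 2024%num; 2059%num; 2094%num; 2129%num; 2164%num; 2200%num; 2236%num; 2272%num; 2309%num; 2346%num; 2383%num; 2421%num; 2459%num; 2497%num; 2535%num; 2573%num; 2611%num; 2649%num; 2687%num; 2725%num; 2763%num; 2802%num; 2841%num; 2880%num; 2919%num; 2958%num; 2997%num; 3036%num; 3075%num; 3114%num; 3153%num; 3193%num; 3233%num; 3273%num; 3313%num; 3353%num; 3393%num; 3433%num; 3473%num; 3513%num; 3553%num; 3593%num; 3634%num; 3675%num; 3716%num; 3757%num; 3798%num; 3839%num; 3880%num; 3921%num; 3962%num; 4003%num; 4044%num; 4085%num; 4127%num; 4169%num; 4211%num; 4253%num; 4295%num; 4337%num; 4379%num; 4421%num; 4463%num; 4505%num];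
[:: 631%num; 666%num; 701%num; 736%num; 771%num; 806%num; 841%num; 876%num; 911%num; 946%num; 981%num; 1016%num; 1051%num; 1086%num; 1121%num; 1156%num; 1191%num; 1226%num; 1261%num; 1296%num; 1331%num; 1366%num; 1401%num; 1436%num; 1471%num; 1506%num; 1541%num; 1576%num; 1611%num; 1646%num; 1681%num; 1716%num; 1751%num; 1786%num; 1821%num; 1856%num; 1891%num; 1926%num; 1961%num; 1996%num; 2031%num; 2066%num; 2101%num; 2136%num; 2171%num; 2206%num; 2242%num; 2278%num; 2314%num; 2351%num; 2388%num; 2425%num; 2463%num; 2501%num; 2539%num; 2577%num; 2615%num; 2654%num; 2693%num; 2732%num; 2771%num; 2810%num; 2849%num; 2888%num; 2927%num; 2966%num; 3005%num; 3045%num; 3085%num; 3125%num; 3165%num; 3205%num; 3245%num; 3285%num; 3325%num; 3365%num; 3405%num; 3445%num; 3486%num; 3527%num; 3568%num; 3609%num; 3650%num; 3691%num; 3732%num; 3773%num; 3814%num; 3855%num; 3896%num; 3938%num; 3980%num; 4022%num; 4064%num; 4106%num; 4148%num; 4190%num; 4232%num; 4274%num; 4316%num; 4358%num; 4400%num; 4442%num; 4484%num; 4527%num; 4570%num; 4613%num; 4656%num; 4699%num; 4742%num];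
[:: 667%num; 703%num; 739%num; 775%num; 811%num; 847%num; 883%num; 919%num; 955%num; 991%num; 1027%num; 1063%num; 1099%num; 1135%num; 1171%num; 1207%num; 1243%num; 1279%num; 1315%num; 1351%num; 1387%num; 1423%num; 1459%num; 1495%num; 1531%num; 1567%num; 1603%num; 1639%num; 1675%num; 1711%num; 1747%num; 1783%num; 1819%num; 1855%num; 1891%num; 1927%num; 1963%num; 1999%num; 2035%num; 2071%num; 2107%num; 2143%num; 2179%num; 2215%num; 2251%num; 2287%num; 2324%num; 2361%num; 2398%num; 2435%num; 2473%num; 2511%num; 2549%num; 2588%num; 2627%num; 2666%num; 2706%num; 2746%num; 2786%num; 2826%num; 2866%num; 2906%num; 2946%num; 2986%num; 3026%num; 3067%num; 3108%num; 3149%num; 3190%num; 3231%num; 3272%num; 3313%num; 3354%num; 3395%num; 3436%num; 3478%num; 3520%num; 3562%num; 3604%num; 3646%num; 3688%num; 3730%num; 3772%num; 3814%num; 3856%num; 3898%num; 3941%num; 3984%num; 4027%num; 4070%num; 4113%num; 4156%num; 4199%num; 4242%num; 4285%num; 4328%num; 4371%num; 4414%num; 4458%num; 4502%num; 4546%num; 4590%num; 4634%num; 4678%num; 4722%num; 4766%num; 4810%num; 4854%num; 4898%num; 4942%num; 4986%num; 5030%num];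
[:: 704%num; 741%num; 778%num; 815%num; 852%num; 889%num; 926%num; 963%num; 1000%num; 1037%num; 1074%num; 1111%num; 1148%num; 1185%num; 1222%num; 1259%num; 1296%num; 1333%num; 1370%num; 1407%num; 1444%num; 1481%num; 1518%num; 1555%num; 1592%num; 1629%num; 1666%num; 1703%num; 1740%num; 1777%num; 1814%num; 1851%num; 1888%num; 1925%num; 1962%num; 1999%num; 2036%num; 2073%num; 2110%num; 2147%num; 2184%num; 2221%num; 2258%num; 2295%num; 2332%num; 2369%num; 2406%num; 2443%num; 2480%num; 2518%num; 2556%num; 2594%num; 2633%num; 2672%num; 2711%num; 2751%num; 2791%num; 2831%num; 2871%num; 2912%num; 2953%num; 2994%num; 3035%num; 3076%num; 3117%num; 3158%num; 3199%num; 3240%num; 3281%num; 3323%num; 3365%num; 3407%num; 3449%num; 3491%num; 3533%num; 3575%num; 3617%num; 3659%num; 3701%num; 3743%num; 3786%num; 3829%num; 3872%num; 3915%num; 3958%num; 4001%num; 4044%num; 4087%num; 4130%num; 4173%num; 4216%num; 4260%num; 4304%num; 4348%num; 4392%num; 4436%num; 4480%num; 4524%num; 4568%num; 4612%num; 4656%num; 4700%num; 4744%num; 4788%num; 4833%num; 4878%num; 4923%num; 4968%num; 5013%num; 5058%num; 5103%num; 5148%num; 5193%num; 5238%num; 5283%num];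
[:: 742%num; 780%num; 818%num; 856%num; 894%num; 932%num; 970%num; 1008%num; 1046%num; 1084%num; 1122%num; 1160%num; 1198%num; 1236%num; 1274%num; 1312%num; 1350%num; 1388%num; 1426%num; 1464%num; 1502%num; 1540%num; 1578%num; 1616%num; 1654%num; 1692%num; 1730%num; 1768%num; 1806%num; 1844%num; 1882%num; 1920%num; 1958%num; 1996%num; 2034%num; 2072%num; 2110%num; 2148%num; 2186%num; 2224%num; 2262%num; 2300%num; 2338%num; 2376%num; 2414%num; 2452%num; 2490%num; 2528%num; 2566%num; 2605%num; 2644%num; 2683%num; 2723%num; 2763%num; 2803%num; 2843%num; 2884%num; 2925%num; 2966%num; 3008%num; 3050%num; 3092%num; 3134%num; 3176%num; 3218%num; 3260%num; 3302%num; 3345%num; 3388%num; 3431%num; 3474%num; 3517%num; 3560%num; 3603%num; 3646%num; 3689%num; 3732%num; 3776%num; 3820%num; 3864%num; 3908%num; 3952%num; 3996%num; 4040%num; 4084%num; 4128%num; 4172%num; 4216%num; 4261%num; 4306%num; 4351%num; 4396%num; 4441%num; 4486%num; 4531%num; 4576%num; 4621%num; 4666%num; 4711%num; 4756%num; 4802%num; 4848%num; 4894%num; 4940%num; 4986%num; 5032%num; 5078%num; 5124%num; 5170%num; 5216%num; 5262%num; 5308%num; 5354%num; 5401%num; 5448%num; 5495%num; 5542%num; 5589%num];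
[:: 781%num; 820%num; 859%num; 898%num; 937%num; 976%num; 1015%num; 1054%num; 1093%num; 1132%num; 1171%num; 1210%num; 1249%num; 1288%num; 1327%num; 1366%num; 1405%num; 1444%num; 1483%num; 1522%num; 1561%num; 1600%num; 1639%num; 1678%num; 1717%num; 1756%num; 1795%num; 1834%num; 1873%num; 1912%num; 1951%num; 1990%num; 2029%num; 2068%num; 2107%num; 2146%num; 2185%num; 2224%num; 2263%num; 2302%num; 2341%num; 2380%num; 2419%num; 2458%num; 2497%num; 2536%num; 2575%num; 2614%num; 2653%num; 2693%num; 2733%num; 2773%num; 2813%num; 2854%num; 2895%num; 2936%num; 2978%num; 3020%num; 3062%num; 3105%num; 3148%num; 3191%num; 3234%num; 3277%num; 3320%num; 3364%num; 3408%num; 3452%num; 3496%num; 3540%num; 3584%num; 3628%num; 3672%num; 3716%num; 3760%num; 3805%num; 3850%num; 3895%num; 3940%num; 3985%num; 4030%num; 4075%num; 4120%num; 4165%num; 4210%num; 4256%num; 4302%num; 4348%num; 4394%num; 4440%num; 4486%num; 4532%num; 4578%num; 4624%num; 4670%num; 4716%num; 4763%num; 4810%num; 4857%num; 4904%num; 4951%num; 4998%num; 5045%num; 5092%num; 5139%num; 5186%num; 5233%num; 5280%num; 5327%num; 5375%num; 5423%num; 5471%num; 5519%num; 5567%num; 5615%num; 5663%num; 5711%num; 5759%num; 5807%num; 5855%num; 5903%num];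
[:: 821%num; 861%num; 901%num; 941%num; 981%num; 1021%num; 1061%num; 1101%num; 1141%num; 1181%num; 1221%num; 1261%num; 1301%num; 1341%num; 1381%num; 1421%num; 1461%num; 1501%num; 1541%num; 1581%num; 1621%num; 1661%num; 1701%num; 1741%num; 1781%num; 1821%num; 1861%num; 1901%num; 1941%num; 1981%num; 2021%num; 2061%num; 2101%num; 2141%num; 2181%num; 2221%num; 2261%num; 2301%num; 2341%num; 2381%num; 2421%num; 2461%num; 2501%num; 2541%num; 2581%num; 2621%num; 2661%num; 2701%num; 2741%num; 2781%num; 2821%num; 2861%num; 2902%num; 2943%num; 2984%num; 3026%num; 3068%num; 3110%num; 3153%num; 3196%num; 3239%num; 3282%num; 3326%num; 3370%num; 3414%num; 3458%num; 3502%num; 3546%num; 3590%num; 3635%num; 3680%num; 3725%num; 3770%num; 3815%num; 3860%num; 3905%num; 3950%num; 3995%num; 4040%num; 4086%num; 4132%num; 4178%num; 4224%num; 4270%num; 4316%num; 4362%num; 4408%num; 4454%num; 4500%num; 4546%num; 4593%num; 4640%num; 4687%num; 4734%num; 4781%num; 4828%num; 4875%num; 4922%num; 4969%num; 5016%num; 5063%num; 5110%num; 5158%num; 5206%num; 5254%num; 5302%num; 5350%num; 5398%num; 5446%num; 5494%num; 5542%num; 5590%num; 5638%num; 5686%num; 5734%num; 5783%num; 5832%num; 5881%num; 5930%num; 5979%num; 6028%num; 6077%num; 6126%num; 6175%num];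
[:: 862%num; 903%num; 944%num; 985%num; 1026%num; 1067%num; 1108%num; 1149%num; 1190%num; 1231%num; 1272%num; 1313%num; 1354%num; 1395%num; 1436%num; 1477%num; 1518%num; 1559%num; 1600%num; 1641%num; 1682%num; 1723%num; 1764%num; 1805%num; 1846%num; 1887%num; 1928%num; 1969%num; 2010%num; 2051%num; 2092%num; 2133%num; 2174%num; 2215%num; 2256%num; 2297%num; 2338%num; 2379%num; 2420%num; 2461%num; 2502%num; 2543%num; 2584%num; 2625%num; 2666%num; 2707%num; 2748%num; 2789%num; 2830%num; 2871%num; 2912%num; 2953%num; 2995%num; 3037%num; 3079%num; 3121%num; 3164%num; 3207%num; 3250%num; 3294%num; 3338%num; 3382%num; 3427%num; 3472%num; 3517%num; 3562%num; 3607%num; 3653%num; 3699%num; 3745%num; 3791%num; 3837%num; 3883%num; 3929%num; 3975%num; 4021%num; 4067%num; 4114%num; 4161%num; 4208%num; 4255%num; 4302%num; 4349%num; 4396%num; 4443%num; 4490%num; 4537%num; 4585%num; 4633%num; 4681%num; 4729%num; 4777%num; 4825%num; 4873%num; 4921%num; 4969%num; 5017%num; 5065%num; 5114%num; 5163%num; 5212%num; 5261%num; 5310%num; 5359%num; 5408%num; 5457%num; 5506%num; 5555%num; 5604%num; 5653%num; 5703%num; 5753%num; 5803%num; 5853%num; 5903%num; 5953%num; 6003%num; 6053%num; 6103%num; 6153%num; 6203%num; 6253%num; 6303%num; 6354%num; 6405%num; 6456%num; 6507%num];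
[:: 904%num; 946%num; 988%num; 1030%num; 1072%num; 1114%num; 1156%num; 1198%num; 1240%num; 1282%num; 1324%num; 1366%num; 1408%num; 1450%num; 1492%num; 1534%num; 1576%num; 1618%num; 1660%num; 1702%num; 1744%num; 1786%num; 1828%num; 1870%num; 1912%num; 1954%num; 1996%num; 2038%num; 2080%num; 2122%num; 2164%num; 2206%num; 2248%num; 2290%num; 2332%num; 2374%num; 2416%num; 2458%num; 2500%num; 2542%num; 2584%num; 2626%num; 2668%num; 2710%num; 2752%num; 2794%num; 2836%num; 2878%num; 2920%num; 2962%num; 3004%num; 3046%num; 3088%num; 3130%num; 3172%num; 3215%num; 3258%num; 3301%num; 3345%num; 3389%num; 3433%num; 3478%num; 3523%num; 3568%num; 3614%num; 3660%num; 3706%num; 3752%num; 3798%num; 3844%num; 3890%num; 3937%num; 3984%num; 4031%num; 4078%num; 4125%num; 4172%num; 4219%num; 4266%num; 4313%num; 4360%num; 4408%num; 4456%num; 4504%num; 4552%num; 4600%num; 4648%num; 4696%num; 4744%num; 4792%num; 4840%num; 4888%num; 4937%num; 4986%num; 5035%num; 5084%num; 5133%num; 5182%num; 5231%num; 5280%num; 5329%num; 5378%num; 5427%num; 5477%num; 5527%num; 5577%num; 5627%num; 5677%num; 5727%num; 5777%num; 5827%num; 5877%num; 5927%num; 5977%num; 6027%num; 6077%num; 6128%num; 6179%num; 6230%num; 6281%num; 6332%num; 6383%num; 6434%num; 6485%num; 6536%num; 6587%num; 6638%num; 6689%num; 6740%num; 6791%num];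
[:: 947%num; 990%num; 1033%num; 1076%num; 1119%num; 1162%num; 1205%num; 1248%num; 1291%num; 1334%num; 1377%num; 1420%num; 1463%num; 1506%num; 1549%num; 1592%num; 1635%num; 1678%num; 1721%num; 1764%num; 1807%num; 1850%num; 1893%num; 1936%num; 1979%num; 2022%num; 2065%num; 2108%num; 2151%num; 2194%num; 2237%num; 2280%num; 2323%num; 2366%num; 2409%num; 2452%num; 2495%num; 2538%num; 2581%num; 2624%num; 2667%num; 2710%num; 2753%num; 2796%num; 2839%num; 2882%num; 2925%num; 2968%num; 3011%num; 3054%num; 3097%num; 3140%num; 3183%num; 3226%num; 3269%num; 3313%num; 3357%num; 3401%num; 3445%num; 3490%num; 3535%num; 3580%num; 3626%num; 3672%num; 3718%num; 3765%num; 3812%num; 3859%num; 3906%num; 3953%num; 4001%num; 4049%num; 4097%num; 4145%num; 4193%num; 4241%num; 4289%num; 4337%num; 4385%num; 4434%num; 4483%num; 4532%num; 4581%num; 4630%num; 4679%num; 4728%num; 4777%num; 4826%num; 4875%num; 4925%num; 4975%num; 5025%num; 5075%num; 5125%num; 5175%num; 5225%num; 5275%num; 5325%num; 5375%num; 5425%num; 5476%num; 5527%num; 5578%num; 5629%num; 5680%num; 5731%num; 5782%num; 5833%num; 5884%num; 5935%num; 5986%num; 6037%num; 6089%num; 6141%num; 6193%num; 6245%num; 6297%num; 6349%num; 6401%num; 6453%num; 6505%num; 6557%num; 6609%num; 6661%num; 6713%num; 6766%num; 6819%num; 6872%num; 6925%num; 6978%num; 7031%num; 7084%num; 7137%num]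;
[:: 991%num; 1035%num; 1079%num; 1123%num; 1167%num; 1211%num; 1255%num; 1299%num; 1343%num; 1387%num; 1431%num; 1475%num; 1519%num; 1563%num; 1607%num; 1651%num; 1695%num; 1739%num; 1783%num; 1827%num; 1871%num; 1915%num; 1959%num; 2003%num; 2047%num; 2091%num; 2135%num; 2179%num; 2223%num; 2267%num; 2311%num; 2355%num; 2399%num; 2443%num; 2487%num; 2531%num; 2575%num; 2619%num; 2663%num; 2707%num; 2751%num; 2795%num; 2839%num; 2883%num; 2927%num; 2971%num; 3015%num; 3059%num; 3103%num; 3147%num; 3191%num; 3235%num; 3279%num; 3323%num; 3367%num; 3411%num; 3455%num; 3499%num; 3544%num; 3589%num; 3634%num; 3680%num; 3726%num; 3772%num; 3819%num; 3866%num; 3913%num; 3961%num; 4009%num; 4057%num; 4105%num; 4153%num; 4201%num; 4250%num; 4299%num; 4348%num; 4397%num; 4446%num; 4495%num; 4544%num; 4593%num; 4642%num; 4691%num; 4741%num; 4791%num; 4841%num; 4891%num; 4941%num; 4991%num; 5041%num; 5091%num; 5141%num; 5191%num; 5241%num; 5292%num; 5343%num; 5394%num; 5445%num; 5496%num; 5547%num; 5598%num; 5649%num; 5700%num; 5751%num; 5802%num; 5854%num; 5906%num; 5958%num; 6010%num; 6062%num; 6114%num; 6166%num; 6218%num; 6270%num; 6322%num; 6374%num; 6426%num; 6478%num; 6531%num; 6584%num; 6637%num; 6690%num; 6743%num; 6796%num; 6849%num; 6902%num; 6955%num; 7008%num; 7061%num; 7114%num; 7167%num; 7221%num; 7275%num;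 7329%num; 7383%num; 7437%num];
[:: 1036%num; 1081%num; 1126%num; 1171%num; 1216%num; 1261%num; 1306%num; 1351%num; 1396%num; 1441%num; 1486%num; 1531%num; 1576%num; 1621%num; 1666%num; 1711%num; 1756%num; 1801%num; 1846%num; 1891%num; 1936%num; 1981%num; 2026%num; 2071%num; 2116%num; 2161%num; 2206%num; 2251%num; 2296%num; 2341%num; 2386%num; 2431%num; 2476%num; 2521%num; 2566%num; 2611%num; 2656%num; 2701%num; 2746%num; 2791%num; 2836%num; 2881%num; 2926%num; 2971%num; 3016%num; 3061%num; 3106%num; 3151%num; 3196%num; 3241%num; 3286%num; 3331%num; 3376%num; 3421%num; 3466%num; 3511%num; 3556%num; 3601%num; 3647%num; 3693%num; 3739%num; 3786%num; 3833%num; 3880%num; 3928%num; 3976%num; 4024%num; 4072%num; 4121%num; 4170%num; 4219%num; 4268%num; 4318%num; 4368%num; 4418%num; 4468%num; 4518%num; 4568%num; 4618%num; 4668%num; 4718%num; 4769%num; 4820%num; 4871%num; 4922%num; 4973%num; 5024%num; 5075%num; 5126%num; 5177%num; 5228%num; 5280%num; 5332%num; 5384%num; 5436%num; 5488%num; 5540%num; 5592%num; 5644%num; 5696%num; 5748%num; 5800%num; 5853%num; 5906%num; 5959%num; 6012%num; 6065%num; 6118%num; 6171%num; 6224%num; 6277%num; 6330%num; 6383%num; 6436%num; 6490%num; 6544%num; 6598%num; 6652%num; 6706%num; 6760%num; 6814%num; 6868%num; 6922%num; 6976%num; 7030%num; 7084%num; 7139%num; 7194%num; 7249%num; 7304%num;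 7359%num; 7414%num; 7469%num; 7524%num; 7579%num; 7634%num; 7689%num; 7744%num; 7799%num];
[:: 1082%num; 1128%num; 1174%num; 1220%num; 1266%num; 1312%num; 1358%num; 1404%num; 1450%num; 1496%num; 1542%num; 1588%num; 1634%num; 1680%num; 1726%num; 1772%num; 1818%num; 1864%num; 1910%num; 1956%num; 2002%num; 2048%num; 2094%num; 2140%num; 2186%num; 2232%num; 2278%num; 2324%num; 2370%num; 2416%num; 2462%num; 2508%num; 2554%num; 2600%num; 2646%num; 2692%num; 2738%num; 2784%num; 2830%num; 2876%num; 2922%num; 2968%num; 3014%num; 3060%num; 3106%num; 3152%num; 3198%num; 3244%num; 3290%num; 3336%num; 3382%num; 3428%num; 3474%num; 3520%num; 3566%num; 3612%num; 3658%num; 3704%num; 3751%num; 3798%num; 3845%num; 3892%num; 3940%num; 3988%num; 4036%num; 4085%num; 4134%num; 4183%num; 4233%num; 4283%num; 4333%num; 4384%num; 4435%num; 4486%num; 4537%num; 4588%num; 4639%num; 4690%num; 4741%num; 4793%num; 4845%num; 4897%num; 4949%num; 5001%num; 5053%num; 5105%num; 5157%num; 5209%num; 5261%num; 5314%num; 5367%num; 5420%num; 5473%num; 5526%num; 5579%num; 5632%num; 5685%num; 5738%num; 5791%num; 5845%num; 5899%num; 5953%num; 6007%num; 6061%num; 6115%num; 6169%num; 6223%num; 6277%num; 6331%num; 6385%num; 6440%num; 6495%num; 6550%num; 6605%num; 6660%num; 6715%num; 6770%num; 6825%num; 6880%num; 6935%num; 6990%num; 7045%num; 7101%num; 7157%num;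 7213%num; 7269%num; 7325%num; 7381%num; 7437%num; 7493%num; 7549%num; 7605%num; 7661%num; 7717%num; 7773%num; 7830%num; 7887%num; 7944%num; 8001%num; 8058%num; 8115%num; 8172%num];
[:: 1129%num; 1176%num; 1223%num; 1270%num; 1317%num; 1364%num; 1411%num; 1458%num; 1505%num; 1552%num; 1599%num; 1646%num; 1693%num; 1740%num; 1787%num; 1834%num; 1881%num; 1928%num; 1975%num; 2022%num; 2069%num; 2116%num; 2163%num; 2210%num; 2257%num; 2304%num; 2351%num; 2398%num; 2445%num; 2492%num; 2539%num; 2586%num; 2633%num; 2680%num; 2727%num; 2774%num; 2821%num; 2868%num; 2915%num; 2962%num; 3009%num; 3056%num; 3103%num; 3150%num; 3197%num; 3244%num; 3291%num; 3338%num; 3385%num; 3432%num; 3479%num; 3526%num; 3573%num; 3620%num; 3667%num; 3714%num; 3761%num; 3808%num; 3855%num; 3902%num; 3949%num; 3997%num; 4045%num; 4093%num; 4142%num; 4191%num; 4240%num; 4290%num; 4340%num; 4390%num; 4441%num; 4492%num; 4543%num; 4594%num; 4646%num; 4698%num; 4750%num; 4802%num; 4854%num; 4906%num; 4958%num; 5010%num; 5062%num; 5115%num; 5168%num; 5221%num; 5274%num; 5327%num; 5380%num; 5433%num; 5486%num; 5539%num; 5592%num; 5646%num; 5700%num; 5754%num; 5808%num; 5862%num; 5916%num; 5970%num; 6024%num; 6078%num; 6132%num; 6186%num; 6241%num; 6296%num; 6351%num; 6406%num; 6461%num; 6516%num; 6571%num; 6626%num; 6681%num; 6736%num; 6791%num;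 6847%num; 6903%num; 6959%num; 7015%num; 7071%num; 7127%num; 7183%num; 7239%num; 7295%num; 7351%num; 7407%num; 7463%num; 7519%num; 7576%num; 7633%num; 7690%num; 7747%num; 7804%num; 7861%num; 7918%num; 7975%num; 8032%num; 8089%num; 8146%num; 8203%num; 8260%num; 8318%num; 8376%num; 8434%num; 8492%num];
[:: 1177%num; 1225%num; 1273%num; 1321%num; 1369%num; 1417%num; 1465%num; 1513%num; 1561%num; 1609%num; 1657%num; 1705%num; 1753%num; 1801%num; 1849%num; 1897%num; 1945%num; 1993%num; 2041%num; 2089%num; 2137%num; 2185%num; 2233%num; 2281%num; 2329%num; 2377%num; 2425%num; 2473%num; 2521%num; 2569%num; 2617%num; 2665%num; 2713%num; 2761%num; 2809%num; 2857%num; 2905%num; 2953%num; 3001%num; 3049%num; 3097%num; 3145%num; 3193%num; 3241%num; 3289%num; 3337%num; 3385%num; 3433%num; 3481%num; 3529%num; 3577%num; 3625%num; 3673%num; 3721%num; 3769%num; 3817%num; 3865%num; 3913%num; 3961%num; 4009%num; 4057%num; 4106%num; 4155%num; 4204%num; 4253%num; 4303%num; 4353%num; 4403%num; 4454%num; 4505%num; 4556%num; 4608%num; 4660%num; 4712%num; 4765%num; 4818%num; 4871%num; 4924%num; 4977%num; 5030%num; 5083%num; 5137%num; 5191%num; 5245%num; 5299%num; 5353%num; 5407%num; 5461%num; 5515%num; 5569%num; 5623%num; 5678%num; 5733%num; 5788%num; 5843%num; 5898%num; 5953%num; 6008%num; 6063%num; 6118%num; 6173%num; 6229%num; 6285%num;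 6341%num; 6397%num; 6453%num; 6509%num; 6565%num; 6621%num; 6677%num; 6733%num; 6789%num; 6846%num; 6903%num; 6960%num; 7017%num; 7074%num; 7131%num; 7188%num; 7245%num; 7302%num; 7359%num; 7416%num; 7473%num; 7531%num; 7589%num; 7647%num; 7705%num; 7763%num; 7821%num; 7879%num; 7937%num; 7995%num; 8053%num; 8111%num; 8169%num; 8227%num; 8286%num; 8345%num; 8404%num; 8463%num; 8522%num; 8581%num; 8640%num; 8699%num; 8758%num; 8817%num; 8876%num];
[:: 1226%num; 1275%num; 1324%num; 1373%num; 1422%num; 1471%num; 1520%num; 1569%num; 1618%num; 1667%num; 1716%num; 1765%num; 1814%num; 1863%num; 1912%num; 1961%num; 2010%num; 2059%num; 2108%num; 2157%num; 2206%num; 2255%num; 2304%num; 2353%num; 2402%num; 2451%num; 2500%num; 2549%num; 2598%num; 2647%num; 2696%num; 2745%num; 2794%num; 2843%num; 2892%num; 2941%num; 2990%num; 3039%num; 3088%num; 3137%num; 3186%num; 3235%num; 3284%num; 3333%num; 3382%num; 3431%num; 3480%num; 3529%num; 3578%num; 3627%num; 3676%num; 3725%num; 3774%num; 3823%num; 3872%num; 3921%num; 3970%num; 4019%num; 4068%num; 4117%num; 4166%num; 4215%num; 4264%num; 4313%num; 4363%num; 4413%num; 4463%num; 4514%num; 4565%num; 4616%num; 4668%num; 4720%num; 4772%num; 4825%num; 4878%num; 4931%num; 4985%num; 5039%num; 5093%num; 5147%num; 5201%num; 5255%num; 5309%num; 5363%num; 5417%num; 5472%num; 5527%num; 5582%num;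 5637%num; 5692%num; 5747%num; 5802%num; 5857%num; 5912%num; 5967%num; 6023%num; 6079%num; 6135%num; 6191%num; 6247%num; 6303%num; 6359%num; 6415%num; 6471%num; 6527%num; 6583%num; 6640%num; 6697%num; 6754%num; 6811%num; 6868%num; 6925%num; 6982%num; 7039%num; 7096%num; 7153%num; 7210%num; 7268%num; 7326%num; 7384%num; 7442%num; 7500%num; 7558%num; 7616%num; 7674%num; 7732%num; 7790%num; 7848%num; 7906%num; 7964%num; 8023%num; 8082%num; 8141%num; 8200%num; 8259%num; 8318%num; 8377%num; 8436%num; 8495%num; 8554%num; 8613%num; 8672%num; 8731%num; 8791%num; 8851%num; 8911%num; 8971%num; 9031%num; 9091%num; 9151%num; 9211%num];
[:: 1276%num; 1326%num; 1376%num; 1426%num; 1476%num; 1526%num; 1576%num; 1626%num; 1676%num; 1726%num; 1776%num; 1826%num; 1876%num; 1926%num; 1976%num; 2026%num; 2076%num; 2126%num; 2176%num; 2226%num; 2276%num; 2326%num; 2376%num; 2426%num; 2476%num; 2526%num; 2576%num; 2626%num; 2676%num; 2726%num; 2776%num; 2826%num; 2876%num; 2926%num; 2976%num; 3026%num; 3076%num; 3126%num; 3176%num; 3226%num; 3276%num; 3326%num; 3376%num; 3426%num; 3476%num; 3526%num; 3576%num; 3626%num; 3676%num; 3726%num; 3776%num; 3826%num; 3876%num; 3926%num; 3976%num; 4026%num; 4076%num; 4126%num; 4176%num; 4226%num; 4276%num; 4326%num; 4376%num; 4426%num; 4477%num; 4528%num; 4579%num; 4631%num; 4683%num; 4735%num;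 4787%num; 4840%num; 4893%num; 4946%num; 5000%num; 5054%num; 5108%num; 5163%num; 5218%num; 5273%num; 5328%num; 5383%num; 5438%num; 5493%num; 5549%num; 5605%num; 5661%num; 5717%num; 5773%num; 5829%num; 5885%num; 5941%num; 5997%num; 6054%num; 6111%num; 6168%num; 6225%num; 6282%num; 6339%num; 6396%num; 6453%num; 6510%num; 6567%num; 6625%num; 6683%num; 6741%num; 6799%num; 6857%num; 6915%num; 6973%num; 7031%num; 7089%num; 7147%num; 7205%num; 7264%num; 7323%num; 7382%num; 7441%num; 7500%num; 7559%num; 7618%num; 7677%num; 7736%num; 7795%num; 7854%num; 7913%num; 7973%num; 8033%num; 8093%num; 8153%num; 8213%num; 8273%num; 8333%num; 8393%num; 8453%num; 8513%num; 8573%num; 8633%num; 8693%num; 8754%num; 8815%num; 8876%num; 8937%num; 8998%num; 9059%num; 9120%num; 9181%num; 9242%num; 9303%num; 9364%num; 9425%num; 9486%num; 9548%num; 9610%num];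
[:: 1327%num; 1378%num; 1429%num; 1480%num; 1531%num; 1582%num; 1633%num; 1684%num; 1735%num; 1786%num; 1837%num; 1888%num; 1939%num; 1990%num; 2041%num; 2092%num; 2143%num; 2194%num; 2245%num; 2296%num; 2347%num; 2398%num; 2449%num; 2500%num; 2551%num; 2602%num; 2653%num; 2704%num; 2755%num; 2806%num; 2857%num; 2908%num; 2959%num; 3010%num; 3061%num; 3112%num; 3163%num; 3214%num; 3265%num; 3316%num; 3367%num; 3418%num; 3469%num; 3520%num; 3571%num; 3622%num; 3673%num; 3724%num; 3775%num; 3826%num; 3877%num; 3928%num; 3979%num; 4030%num; 4081%num; 4132%num; 4183%num; 4234%num; 4285%num; 4336%num; 4387%num; 4438%num; 4489%num; 4540%num; 4592%num; 4644%num; 4696%num; 4748%num; 4801%num; 4854%num; 4907%num; 4961%num; 5015%num; 5069%num; 5124%num; 5179%num; 5234%num; 5289%num; 5345%num; 5401%num; 5457%num; 5513%num; 5570%num; 5627%num; 5684%num; 5741%num; 5798%num; 5855%num; 5912%num; 5969%num; 6026%num; 6084%num; 6142%num; 6200%num; 6258%num; 6316%num; 6374%num; 6432%num; 6490%num; 6548%num; 6606%num; 6665%num; 6724%num; 6783%num; 6842%num; 6901%num; 6960%num; 7019%num; 7078%num; 7137%num; 7196%num; 7256%num; 7316%num; 7376%num; 7436%num; 7496%num; 7556%num; 7616%num; 7676%num; 7736%num; 7796%num; 7856%num; 7916%num; 7977%num; 8038%num; 8099%num; 8160%num; 8221%num; 8282%num; 8343%num; 8404%num; 8465%num; 8526%num;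 8587%num; 8648%num; 8710%num; 8772%num; 8834%num; 8896%num; 8958%num; 9020%num; 9082%num; 9144%num; 9206%num; 9268%num; 9330%num; 9392%num; 9455%num; 9518%num; 9581%num; 9644%num; 9707%num; 9770%num; 9833%num; 9896%num; 9959%num; 10022%num];
[:: 1379%num; 1431%num; 1483%num; 1535%num; 1587%num; 1639%num; 1691%num; 1743%num; 1795%num; 1847%num; 1899%num; 1951%num; 2003%num; 2055%num; 2107%num; 2159%num; 2211%num; 2263%num; 2315%num; 2367%num; 2419%num; 2471%num; 2523%num; 2575%num; 2627%num; 2679%num; 2731%num; 2783%num; 2835%num; 2887%num; 2939%num; 2991%num; 3043%num; 3095%num; 3147%num; 3199%num; 3251%num; 3303%num; 3355%num; 3407%num; 3459%num; 3511%num; 3563%num; 3615%num; 3667%num; 3719%num; 3771%num; 3823%num; 3875%num; 3927%num; 3979%num; 4031%num; 4083%num; 4135%num; 4187%num; 4239%num; 4291%num; 4343%num; 4395%num; 4447%num; 4499%num; 4551%num; 4603%num; 4655%num; 4707%num; 4759%num; 4811%num; 4864%num; 4917%num; 4970%num; 5024%num; 5078%num; 5132%num; 5187%num; 5242%num; 5297%num; 5352%num; 5408%num; 5464%num; 5520%num; 5577%num; 5634%num; 5691%num; 5748%num; 5805%num; 5862%num; 5920%num; 5978%num; 6036%num; 6094%num; 6152%num; 6210%num; 6268%num; 6326%num; 6384%num; 6443%num; 6502%num; 6561%num; 6620%num; 6679%num; 6738%num; 6797%num; 6856%num; 6915%num; 6974%num; 7034%num; 7094%num; 7154%num; 7214%num;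 7274%num; 7334%num; 7394%num; 7454%num; 7514%num; 7574%num; 7634%num; 7695%num; 7756%num; 7817%num; 7878%num; 7939%num; 8000%num; 8061%num; 8122%num; 8183%num; 8244%num; 8305%num; 8366%num; 8428%num; 8490%num; 8552%num; 8614%num; 8676%num; 8738%num; 8800%num; 8862%num; 8924%num; 8986%num; 9048%num; 9110%num; 9173%num; 9236%num; 9299%num; 9362%num; 9425%num; 9488%num; 9551%num; 9614%num; 9677%num; 9740%num; 9803%num; 9866%num; 9929%num; 9993%num; 10057%num; 10121%num; 10185%num; 10249%num; 10313%num; 10377%num];
[:: 1432%num; 1485%num; 1538%num; 1591%num; 1644%num; 1697%num; 1750%num; 1803%num; 1856%num; 1909%num; 1962%num; 2015%num; 2068%num; 2121%num; 2174%num; 2227%num; 2280%num; 2333%num; 2386%num; 2439%num; 2492%num; 2545%num; 2598%num; 2651%num; 2704%num; 2757%num; 2810%num; 2863%num; 2916%num; 2969%num; 3022%num; 3075%num; 3128%num; 3181%num; 3234%num; 3287%num; 3340%num; 3393%num; 3446%num; 3499%num; 3552%num; 3605%num; 3658%num; 3711%num; 3764%num; 3817%num; 3870%num; 3923%num; 3976%num; 4029%num; 4082%num; 4135%num; 4188%num; 4241%num; 4294%num; 4347%num; 4400%num; 4453%num; 4506%num; 4559%num; 4612%num; 4665%num; 4718%num; 4771%num; 4824%num; 4877%num; 4930%num; 4984%num; 5038%num; 5092%num; 5146%num; 5201%num; 5256%num; 5311%num; 5367%num; 5423%num; 5479%num; 5536%num; 5593%num; 5650%num; 5708%num; 5766%num;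 5824%num; 5882%num; 5941%num; 6000%num; 6059%num; 6118%num; 6177%num; 6236%num; 6295%num; 6354%num; 6413%num; 6473%num; 6533%num; 6593%num; 6653%num; 6713%num; 6773%num; 6833%num; 6893%num; 6953%num; 7013%num; 7074%num; 7135%num; 7196%num; 7257%num; 7318%num; 7379%num; 7440%num; 7501%num; 7562%num; 7623%num; 7685%num; 7747%num; 7809%num; 7871%num; 7933%num; 7995%num; 8057%num; 8119%num; 8181%num; 8243%num; 8305%num; 8368%num; 8431%num; 8494%num; 8557%num; 8620%num; 8683%num; 8746%num; 8809%num; 8872%num; 8935%num; 8998%num; 9061%num; 9125%num; 9189%num; 9253%num; 9317%num; 9381%num; 9445%num; 9509%num; 9573%num; 9637%num; 9701%num; 9765%num; 9829%num; 9893%num; 9958%num; 10023%num; 10088%num; 10153%num; 10218%num; 10283%num; 10348%num; 10413%num; 10478%num; 10543%num; 10608%num; 10673%num; 10738%num; 10804%num];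
[:: 1486%num; 1540%num; 1594%num; 1648%num; 1702%num; 1756%num; 1810%num; 1864%num; 1918%num; 1972%num; 2026%num; 2080%num; 2134%num; 2188%num; 2242%num; 2296%num; 2350%num; 2404%num; 2458%num; 2512%num; 2566%num; 2620%num; 2674%num; 2728%num; 2782%num; 2836%num; 2890%num; 2944%num; 2998%num; 3052%num; 3106%num; 3160%num; 3214%num; 3268%num; 3322%num; 3376%num; 3430%num; 3484%num; 3538%num; 3592%num; 3646%num; 3700%num; 3754%num; 3808%num; 3862%num; 3916%num; 3970%num; 4024%num; 4078%num; 4132%num; 4186%num; 4240%num; 4294%num; 4348%num; 4402%num; 4456%num; 4510%num; 4564%num; 4618%num; 4672%num; 4726%num; 4780%num; 4834%num; 4888%num; 4942%num; 4996%num; 5050%num; 5104%num; 5158%num; 5212%num; 5267%num; 5322%num; 5377%num; 5433%num; 5489%num; 5545%num; 5602%num; 5659%num; 5716%num; 5774%num; 5832%num; 5890%num; 5948%num; 6007%num; 6066%num; 6125%num; 6184%num; 6243%num; 6303%num; 6363%num; 6423%num; 6483%num; 6543%num; 6603%num; 6663%num; 6723%num; 6783%num; 6844%num; 6905%num; 6966%num; 7027%num; 7088%num; 7149%num; 7210%num; 7271%num; 7332%num; 7393%num; 7455%num; 7517%num; 7579%num; 7641%num; 7703%num; 7765%num; 7827%num; 7889%num; 7951%num; 8013%num; 8075%num; 8138%num; 8201%num; 8264%num; 8327%num; 8390%num; 8453%num; 8516%num; 8579%num; 8642%num; 8705%num; 8768%num; 8831%num; 8895%num; 8959%num; 9023%num;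 9087%num; 9151%num; 9215%num; 9279%num; 9343%num; 9407%num; 9471%num; 9535%num; 9599%num; 9664%num; 9729%num; 9794%num; 9859%num; 9924%num; 9989%num; 10054%num; 10119%num; 10184%num; 10249%num; 10314%num; 10379%num; 10444%num; 10510%num; 10576%num; 10642%num; 10708%num; 10774%num; 10840%num; 10906%num; 10972%num; 11038%num; 11104%num; 11170%num];
[:: 1541%num; 1596%num; 1651%num; 1706%num; 1761%num; 1816%num; 1871%num; 1926%num; 1981%num; 2036%num; 2091%num; 2146%num; 2201%num; 2256%num; 2311%num; 2366%num; 2421%num; 2476%num; 2531%num; 2586%num; 2641%num; 2696%num; 2751%num; 2806%num; 2861%num; 2916%num; 2971%num; 3026%num; 3081%num; 3136%num; 3191%num; 3246%num; 3301%num; 3356%num; 3411%num; 3466%num; 3521%num; 3576%num; 3631%num; 3686%num; 3741%num; 3796%num; 3851%num; 3906%num; 3961%num; 4016%num; 4071%num; 4126%num; 4181%num; 4236%num; 4291%num; 4346%num; 4401%num; 4456%num; 4511%num; 4566%num; 4621%num; 4676%num; 4731%num; 4786%num; 4841%num; 4896%num; 4951%num; 5006%num; 5061%num; 5116%num; 5171%num; 5226%num; 5281%num; 5336%num; 5392%num; 5448%num; 5504%num; 5560%num; 5617%num; 5674%num; 5731%num; 5789%num; 5847%num; 5905%num; 5964%num; 6023%num; 6082%num; 6142%num; 6202%num; 6262%num; 6323%num; 6384%num; 6445%num; 6506%num; 6567%num; 6628%num; 6689%num; 6750%num; 6811%num; 6873%num; 6935%num; 6997%num; 7059%num; 7121%num;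 7183%num; 7245%num; 7307%num; 7369%num; 7431%num; 7494%num; 7557%num; 7620%num; 7683%num; 7746%num; 7809%num; 7872%num; 7935%num; 7998%num; 8061%num; 8125%num; 8189%num; 8253%num; 8317%num; 8381%num; 8445%num; 8509%num; 8573%num; 8637%num; 8701%num; 8765%num; 8830%num; 8895%num; 8960%num; 9025%num; 9090%num; 9155%num; 9220%num; 9285%num; 9350%num; 9415%num; 9480%num; 9545%num; 9611%num; 9677%num; 9743%num; 9809%num; 9875%num; 9941%num; 10007%num; 10073%num; 10139%num; 10205%num; 10271%num; 10337%num; 10404%num; 10471%num; 10538%num; 10605%num; 10672%num; 10739%num; 10806%num; 10873%num; 10940%num; 11007%num; 11074%num; 11141%num; 11208%num; 11275%num; 11343%num; 11411%num; 11479%num; 11547%num; 11615%num];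
[:: 1597%num; 1653%num; 1709%num; 1765%num; 1821%num; 1877%num; 1933%num; 1989%num; 2045%num; 2101%num; 2157%num; 2213%num; 2269%num; 2325%num; 2381%num; 2437%num; 2493%num; 2549%num; 2605%num; 2661%num; 2717%num; 2773%num; 2829%num; 2885%num; 2941%num; 2997%num; 3053%num; 3109%num; 3165%num; 3221%num; 3277%num; 3333%num; 3389%num; 3445%num; 3501%num; 3557%num; 3613%num; 3669%num; 3725%num; 3781%num; 3837%num; 3893%num; 3949%num; 4005%num; 4061%num; 4117%num; 4173%num; 4229%num; 4285%num; 4341%num; 4397%num; 4453%num; 4509%num; 4565%num; 4621%num; 4677%num; 4733%num; 4789%num; 4845%num; 4901%num; 4957%num; 5013%num; 5069%num; 5125%num; 5181%num; 5237%num; 5293%num; 5349%num; 5405%num; 5461%num; 5517%num; 5573%num; 5629%num; 5686%num; 5743%num; 5800%num; 5858%num; 5916%num; 5974%num; 6033%num; 6092%num; 6151%num; 6211%num; 6271%num; 6331%num; 6392%num; 6453%num; 6514%num; 6575%num; 6636%num; 6698%num; 6760%num; 6822%num; 6884%num; 6946%num; 7008%num; 7070%num; 7132%num; 7194%num; 7257%num; 7320%num; 7383%num; 7446%num; 7509%num; 7572%num; 7635%num; 7698%num; 7761%num; 7824%num; 7888%num; 7952%num; 8016%num; 8080%num; 8144%num; 8208%num; 8272%num; 8336%num; 8400%num; 8464%num; 8528%num; 8593%num; 8658%num; 8723%num; 8788%num; 8853%num; 8918%num; 8983%num; 9048%num; 9113%num; 9178%num; 9243%num; 9309%num; 9375%num;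 9441%num; 9507%num; 9573%num; 9639%num; 9705%num; 9771%num; 9837%num; 9903%num; 9969%num; 10035%num; 10102%num; 10169%num; 10236%num; 10303%num; 10370%num; 10437%num; 10504%num; 10571%num; 10638%num; 10705%num; 10772%num; 10839%num; 10906%num; 10974%num; 11042%num; 11110%num; 11178%num; 11246%num; 11314%num; 11382%num; 11450%num; 11518%num; 11586%num; 11654%num; 11722%num; 11790%num; 11858%num; 11927%num; 11996%num];
[:: 1654%num; 1711%num; 1768%num; 1825%num; 1882%num; 1939%num; 1996%num; 2053%num; 2110%num; 2167%num; 2224%num; 2281%num; 2338%num; 2395%num; 2452%num; 2509%num; 2566%num; 2623%num; 2680%num; 2737%num; 2794%num; 2851%num; 2908%num; 2965%num; 3022%num; 3079%num; 3136%num; 3193%num; 3250%num; 3307%num; 3364%num; 3421%num; 3478%num; 3535%num; 3592%num; 3649%num; 3706%num; 3763%num; 3820%num; 3877%num; 3934%num; 3991%num; 4048%num; 4105%num; 4162%num; 4219%num; 4276%num; 4333%num; 4390%num; 4447%num; 4504%num; 4561%num; 4618%num; 4675%num; 4732%num; 4789%num; 4846%num; 4903%num; 4960%num; 5017%num; 5074%num; 5131%num; 5188%num; 5245%num; 5302%num; 5359%num; 5416%num; 5473%num; 5530%num; 5587%num; 5644%num; 5701%num; 5758%num; 5816%num; 5874%num; 5932%num; 5991%num; 6050%num; 6109%num; 6168%num; 6228%num; 6288%num; 6348%num; 6409%num; 6470%num; 6531%num; 6593%num; 6655%num; 6717%num; 6780%num; 6843%num; 6906%num; 6969%num; 7032%num;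 7095%num; 7158%num; 7221%num; 7284%num; 7348%num; 7412%num; 7476%num; 7540%num; 7604%num; 7668%num; 7732%num; 7796%num; 7860%num; 7925%num; 7990%num; 8055%num; 8120%num; 8185%num; 8250%num; 8315%num; 8380%num; 8445%num; 8510%num; 8576%num; 8642%num; 8708%num; 8774%num; 8840%num; 8906%num; 8972%num; 9038%num; 9104%num; 9170%num; 9236%num; 9303%num; 9370%num; 9437%num; 9504%num; 9571%num; 9638%num; 9705%num; 9772%num; 9839%num; 9906%num; 9973%num; 10040%num; 10108%num; 10176%num; 10244%num; 10312%num; 10380%num; 10448%num; 10516%num; 10584%num; 10652%num; 10720%num; 10788%num; 10856%num; 10925%num; 10994%num; 11063%num; 11132%num; 11201%num; 11270%num; 11339%num; 11408%num; 11477%num; 11546%num; 11615%num; 11684%num; 11753%num; 11823%num; 11893%num; 11963%num; 12033%num; 12103%num; 12173%num; 12243%num; 12313%num; 12383%num; 12453%num];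
[:: 1712%num; 1770%num; 1828%num; 1886%num; 1944%num; 2002%num; 2060%num; 2118%num; 2176%num; 2234%num; 2292%num; 2350%num; 2408%num; 2466%num; 2524%num; 2582%num; 2640%num; 2698%num; 2756%num; 2814%num; 2872%num; 2930%num; 2988%num; 3046%num; 3104%num; 3162%num; 3220%num; 3278%num; 3336%num; 3394%num; 3452%num; 3510%num; 3568%num; 3626%num; 3684%num; 3742%num; 3800%num; 3858%num; 3916%num; 3974%num; 4032%num; 4090%num; 4148%num; 4206%num; 4264%num; 4322%num; 4380%num; 4438%num; 4496%num; 4554%num; 4612%num; 4670%num; 4728%num; 4786%num; 4844%num; 4902%num; 4960%num; 5018%num; 5076%num; 5134%num; 5192%num; 5250%num; 5308%num; 5366%num; 5424%num; 5482%num; 5540%num; 5598%num; 5656%num; 5714%num; 5772%num; 5830%num; 5888%num; 5947%num; 6006%num; 6065%num; 6124%num; 6184%num; 6244%num; 6304%num; 6365%num; 6426%num; 6487%num; 6549%num; 6611%num; 6673%num; 6735%num; 6798%num; 6861%num; 6924%num; 6988%num; 7052%num; 7116%num; 7180%num; 7244%num; 7308%num; 7373%num; 7438%num; 7503%num; 7568%num; 7633%num; 7698%num; 7763%num; 7828%num; 7893%num; 7959%num; 8025%num; 8091%num; 8157%num; 8223%num; 8289%num; 8355%num; 8421%num; 8487%num; 8553%num; 8620%num; 8687%num; 8754%num; 8821%num; 8888%num; 8955%num; 9022%num; 9089%num; 9156%num; 9223%num; 9290%num; 9358%num; 9426%num; 9494%num; 9562%num; 9630%num; 9698%num; 9766%num;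 9834%num; 9902%num; 9970%num; 10038%num; 10107%num; 10176%num; 10245%num; 10314%num; 10383%num; 10452%num; 10521%num; 10590%num; 10659%num; 10728%num; 10797%num; 10866%num; 10936%num; 11006%num; 11076%num; 11146%num; 11216%num; 11286%num; 11356%num; 11426%num; 11496%num; 11566%num; 11636%num; 11706%num; 11777%num; 11848%num; 11919%num; 11990%num; 12061%num; 12132%num; 12203%num; 12274%num; 12345%num; 12416%num; 12487%num; 12558%num; 12629%num; 12701%num; 12773%num; 12845%num; 12917%num]].

Definition gN (k v : nat) : N := nth 0%num (nth [::] tabsN k) (v - k).
Definition gt (k v : nat) : nat := N.to_nat (gN k v).

Definition chk_step (k v : nat) : bool :=
  let a := gN k (v - 1) in let b := gN k v in
  let Dm := N.to_nat (b + 1 - a)%num in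
  all (fun d => N.leb (N.of_nat d * N.of_nat v)%num (2 * b + 1)%num ==>
         (OKN (N.of_nat d.+1) (N.of_nat Dm) (N.of_nat k) || OKN (N.of_nat v) (N.of_nat d) (N.of_nat k)))
      (iota Dm (v - Dm)).

Definition chk (k : nat) : bool :=
  [&& N.ltb (N.of_nat k * (N.of_nat k - 1))%num (2 * gN k k)%num,
      all (chk_step k) (iota k.+1 (3 * k)) &
      all (fun n => OKN (N.of_nat n) (N.of_nat (2 * k)) (N.of_nat k) || N.leb (gN k n) (N.of_nat k * N.of_nat n)%num)
          (iota (2 * k).+1 (2 * k))].

Lemma chk_all : all chk (iota 1 59).
Proof. vm_compute. reflexivity. Qed.

Lemma chk_sound k : chk k ->
  [/\ k * (k - 1) < 2 * gt k k,
      (forall v d D, k < v -> v <= 4 * k -> d * v <= 2 * gt k v + 1 -> D <= d -> d < v ->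
         gt k v < gt k (v - 1) + D -> OK (d + 1) D k || OK v d k) &
      (forall n, 2 * k < n -> n <= 4 * k -> ~~ OK n (2 * k) k -> gt k n <= k * n)].
Proof.
case/and3P=> h0 hs hf; split.
- move/N.ltb_lt: h0; rewrite /gt; lia.
- move=> v d D kv v4 dv Dd dlt hg.
  have : v \in iota k.+1 (3 * k) by rewrite mem_iota; lia.
  move/(allP hs); rewrite /chk_step => /allP hd.
  have Dm_le : N.to_nat (gN k v + 1 - gN k (v - 1))%num <= D by move: hg; rewrite /gt; lia.
  have : d \in iota (N.to_nat (gN k v + 1 - gN k (v - 1))%num) (v - N.to_nat (gN k v + 1 - gN k (v - 1))%num).
    rewrite mem_iota; lia.
  move/hd => /implyP h.
  have : N.leb (N.of_nat d * N.of_nat v)%num (2 * gN k v + 1)%num.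
    by apply/N.leb_le; move: dv; rewrite /gt; lia.
  move/h; rewrite !OKN_OK => /orP[h1|->]; last by rewrite orbT.
  by rewrite addn1 (OK_mono h1 Dm_le).
- move=> n n1 n2 nok.
  have : n \in iota (2 * k).+1 (2 * k) by rewrite mem_iota; lia.
  move/(allP hf); rewrite OKN_OK (negbTE nok) /= => /N.leb_le.
  rewrite /gt; lia.
Qed.

End TabM.

Theorem lemma8 (k : nat) (G : finType) (e : rel G) :
  1 <= k ->
  simple_graph e ->
  0 < #|G| ->
  (* average degree at least 4k *)
  4 * k * #|G| <= \sum_(v : G) deg e v ->
  is_minor e (@complete_rel k)
  \/ exists (H : finType) (eH : rel H) (n delta : nat),
       [/\ simple_graph eH, is_minor e eH, n = #|H| & is_min_degree eH delta] /\
       [/\ 6273 * n <= 10000 * delta,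
           10000 * n + 5773 * k <= 10000 * (2 * delta),
           k <= delta, delta < n & n <= 4 * k].
Proof.
move=> k1 sg G0 hs; right.
have [hk|hk] : k < 60 \/ 60 <= k by lia.
  have : TabM.chk k by apply: (allP TabM.chk_all); rewrite mem_iota; lia.
  case/TabM.chk_sound => h0 hst hf.
  exact (main_gen sg (g := TabM.gt k) k1 G0 hs h0 hst hf).
have h0 := H0_closed k1.
have hst : forall v d D, k < v -> v <= 4 * k -> d * v <= 2 * gc k v + 1 -> D <= d -> d < v ->
      gc k v < gc k (v - 1) + D -> OK (d + 1) D k || OK v d k.
  by move=> v d D kv v4 dv Dd dlt hg; apply: step_closed.
have hf : forall n, 2 * k < n -> n <= 4 * k -> ~~ OK n (2 * k) k -> gc k n <= k * n.
  by move=> n n1 n2 _; apply: HF_closed => //; lia.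
exact (main_gen sg (g := gc k) k1 G0 hs h0 hst hf).
Qed.
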